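(* Let $n<7$, $n\ge2$ be a fixed real number, let $m=(n+3)/2$, let $\nu_1,\nu_2\ge0$ and $T>0$. Let $u_1,\omega_1,\psi_1:[0,T)\times[0,\infty)\times\mathbb{R}\to\mathbb{R}$ be smooth functions which, for each $t$, are even in $r$ (extend to smooth functions on $\mathbb{R}^2$ even in $r$) and which, with all their derivatives, decay rapidly as $r^2+z^2\to\infty$, uniformly on compact time subintervals. Suppose that on $(0,T)\times(0,\infty)\times\mathbb{R}$ $$u_{1,t}+u^ru_{1,r}+u^zu_{1,z}=2u_1\psi_{1,z}+\nu_1\Delta_nu_1,$$ $$\omega_{1,t}+u^r\omega_{1,r}+u^z\omega_{1,z}=(u_1^2)_z+\nu_2\Delta_n\omega_1,$$ $$-\Delta_n\psi_1=\omega_1,$$ where $\Delta_n=\partial_r^2+\frac nr\partial_r+\partial_z^2$, $u^r=-r\psi_{1,z}$ and $u^z=(m-1)\psi_1+r\psi_{1,r}$. Then for all $t\in(0,T)$, $$\frac12\frac{d}{dt}\int_{\mathbb{R}}\int_0^\infty\Big(u_1^2+\frac{7-n}{4}\big(\psi_{1,r}^2+\psi_{1,z}^2\big)\Big)r^n\,dr\,dz=-\nu_1\int_{\mathbb{R}}\int_0^\infty\big(u_{1,r}^2+u_{1,z}^2\big)r^n\,dr\,dz-\nu_2\,\frac{7-n}{4}\int_{\mathbb{R}}\int_0^\infty(\Delta_n\psi_1)^2\,r^n\,dr\,dz .$$ In particular the (nonnegative) generalized energy $\int\!\!\int\big(u_1^2+\frac{7-n}{4}|\nabla\psi_1|^2\big)r^n\,dr\,dz$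 is non-increasing in time, and conserved when $\nu_1=\nu_2=0$.
   Context: This is the ''generalized axisymmetric Boussinesq system'': the density $\Gamma=r^2u_1$ satisfies $\Gamma_t+u^r\Gamma_r+u^z\Gamma_z=\nu_1(\Gamma_{rr}+\frac{n-4}{r}\Gamma_r+\frac{6-2n}{r^2}\Gamma+\Gamma_{zz})$ (equivalent to the stated $u_1$ equation), the source term in the $\omega_1$ equation is $(\Gamma^2/r^4)_z=(u_1^2)_z$, and the term $-(n-3)\psi_{1,z}\omega_1$ of the generalized Navier--Stokes equations is removed. The velocity is $u^r=-(r^{m-1}\psi_1)_z/r^{m-2}$, $u^z=(r^{m-1}\psi_1)_r/r^{m-2}$ with $m=(n+3)/2$, which satisfies $(r^{m-2}u^r)_r+(r^{m-2}u^z)_z=0$. Here $\nabla=(\partial_r,\partial_z)$. *)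

(* Defs.v *)
From Stdlib Require Import Reals List.
From Coquelicot Require Import Coquelicot.
Open Scope R_scope.

(** Functions of (t, r, z). *)
Definition fn3 := R -> R -> R -> R.

Definition Dt (f : fn3) : fn3 := fun t r z => Derive (fun s => f s r z) t.
Definition Dr (f : fn3) : fn3 := fun t r z => Derive (fun s => f t s z) r.
Definition Dz (f : fn3) : fn3 := fun t r z => Derive (fun s => f t r s) z.

Inductive dir := dirT | dirR | dirZ.

Definition Dop (d : dir) : fn3 -> fn3 :=
  match d with dirT => Dt | dirR => Dr | dirZ => Dz end.

Fixpoint Dmulti (l : list dir) (f : fn3) : fn3 :=
  match l with nil => f | d :: l' => Dop d (Dmulti l' f) end.

Definition ex_partial (d : dir) (f : fn3) (t r z : R) : Prop :=
  match d with
  | dirT => ex_derive (fun s => f s r z) t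
  | dirR => ex_derive (fun s => f t s z) r
  | dirZ => ex_derive (fun s => f t r s) z
  end.

Definition cont3 (f : fn3) (t r z : R) : Prop :=
  continuous (fun p : R * R * R => f (fst (fst p)) (snd (fst p)) (snd p)) (t, r, z).

Definition smooth_slab (T : R) (f : fn3) : Prop :=
  forall (l : list dir) (t r z : R), 0 < t < T ->
    cont3 (Dmulti l f) t r z /\ forall d, ex_partial d (Dmulti l f) t r z.

Definition even_r (f : fn3) : Prop := forall t r z, f t (- r) z = f t r z.

Definition rapid_decay (T : R) (f : fn3) : Prop :=
  forall (l : list dir) (k : nat) (a b : R), 0 < a -> a <= b -> b < T ->
    exists C : R, forall t r z, a <= t <= b ->
      (1 + r ^ 2 + z ^ 2) ^ k * Rabs (Dmulti l f t r z) <= C.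

Definition Lap (n : R) (f : fn3) : fn3 :=
  fun t r z => Dr (Dr f) t r z + n / r * Dr f t r z + Dz (Dz f) t r z.

Definition int_half_plane (F : R -> R -> R) : R :=
  RInt_gen (fun z => RInt_gen (fun r => F r z) (at_point 0) (Rbar_locally p_infty))
    (Rbar_locally m_infty) (Rbar_locally p_infty).

Definition energy (n : R) (u psi : fn3) (t : R) : R :=
  int_half_plane (fun r z =>
    (u t r z ^ 2 + (7 - n) / 4 * (Dr psi t r z ^ 2 + Dz psi t r z ^ 2))
      * Rpower r n).

(* Main.v *)
Require Import Defs.
From Stdlib Require Import Reals Lra Lia Psatz List.
From Coquelicot Require Import Coquelicot.
Open Scope R_scope.

Definition gg (x : R) : R := / (1 + x ^ 2).

Lemma gg_pos x : 0 < gg x.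
Proof. unfold gg. apply Rinv_0_lt_compat. nra. Qed.

Lemma gg_le1 x : gg x <= 1.
Proof. unfold gg. rewrite <- Rinv_1. apply Rinv_le_contravar; nra. Qed.

Lemma gg_cont x : continuous gg x.
Proof.
  apply (ex_derive_continuous (K:=R_AbsRing) (V:=R_NormedModule) gg). unfold gg. auto_derive. nra.
Qed.

Lemma is_RInt_gg a b : is_RInt gg a b (atan b - atan a).
Proof.
  apply (is_RInt_derive atan gg).
  - intros x _. unfold gg. 
    replace (/ (1 + x ^ 2)) with (/ (1 + x²)) by (unfold Rsqr; f_equal; ring).
    apply is_derive_atan.
  - intros; apply gg_cont.
Qed.

Lemma ex_RInt_cont (f : R -> R) a b : (forall x, continuous f x) -> ex_RInt f a b.
Proof. intros H. apply (ex_RInt_continuous (V:=R_CompleteNormedModule)). intros; apply H. Qed.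

Lemma ball_R (x y e : R) : ball x e y <-> Rabs (y - x) < e.
Proof. reflexivity. Qed.

Ltac ballR H := match type of H with @ball _ ?x ?e ?y => change (Rabs (y - x) < e) in H end.

Lemma RInt_bound (f : R -> R) (C a b : R) :
  (forall x, continuous f x) -> (forall x, Rabs (f x) <= C * gg x) ->
  Rabs (RInt f a b) <= C * Rabs (atan b - atan a).
Proof.
  intros Hc Hb.
  assert (HC : 0 <= C).
  { specialize (Hb 0). pose proof (gg_pos 0). pose proof (Rabs_pos (f 0)).
    destruct (Rle_or_lt 0 C); auto. nra. }
  assert (Hex : forall a b, ex_RInt f a b) by (intros; apply ex_RInt_cont; auto).
  assert (Hexg : forall a b, ex_RInt (fun x => C * gg x) a b).
  { intros; apply ex_RInt_cont. intros. apply (continuous_mult (fun _ => C) gg).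
    apply continuous_const. apply gg_cont. }
  assert (Hm : forall a b, a <= b -> Rabs (RInt f a b) <= C * Rabs (atan b - atan a)).
  { intros a' b' Hab.
    eapply Rle_trans. apply abs_RInt_le; auto.
    eapply Rle_trans. apply (RInt_le _ (fun x => C * gg x)).
    { exact Hab. }
    { apply ex_RInt_cont; intros; apply continuous_Rabs_comp; auto. }
    { apply Hexg. }
    { intros; apply Hb. }
    replace (RInt (fun x => C * gg x) a' b') with (C * (atan b' - atan a')).
    2:{ symmetry. apply is_RInt_unique. exact (is_RInt_scal gg a' b' C _ (is_RInt_gg a' b')). }
    apply Rmult_le_compat_l; auto. apply Rle_abs. }
  destruct (Rle_or_lt a b) as [H|H]; auto.
  rewrite <- opp_RInt_swap by auto. unfold opp; simpl.
  rewrite Rabs_Ropp. replace (atan b - atan a) with (- (atan a - atan b)) by ring.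
  rewrite Rabs_Ropp. apply Hm; lra.
Qed.

Lemma atan_small : forall e : posreal, exists d : posreal, forall y, Rabs y < d -> Rabs (atan y) < e.
Proof.
  intros e. pose proof (continuous_atan 0) as H.
  apply filterlim_locally with (eps := e) in H.
  destruct H as [d Hd]. exists d. intros y Hy.
  specialize (Hd y).
  assert (ball 0 d y) by (apply ball_R; rewrite Rminus_0_r; auto).
  specialize (Hd H). apply ball_R in Hd. rewrite atan_0 in Hd. replace (atan y) with (atan y - 0) by ring. auto.
Qed.

Lemma atan_pinfty : filterlim atan (Rbar_locally p_infty) (locally (PI/2)).
Proof.
  apply filterlim_locally. intros e.
  destruct (atan_small e) as [d Hd].
  exists (/ d). intros x Hx.
  assert (Hdp : 0 < d) by apply cond_pos.
  assert (Hx0 : 0 < x). { assert (0 < / d) by (apply Rinv_0_lt_compat; auto). lra. }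
  apply ball_R. rewrite <- (Rinv_inv x) at 1. rewrite atan_inv.
  2:{ apply Rinv_0_lt_compat; auto. }
  replace (PI / 2 - atan (/ x) - PI / 2) with (- atan (/ x)) by ring.
  rewrite Rabs_Ropp. apply Hd.
  rewrite Rabs_pos_eq by (left; apply Rinv_0_lt_compat; auto).
  rewrite <- (Rinv_inv d). apply Rinv_lt_contravar; auto.
  apply Rmult_lt_0_compat; auto. apply Rinv_0_lt_compat; auto.
Qed.

Lemma atan_minfty : filterlim atan (Rbar_locally m_infty) (locally (- (PI/2))).
Proof.
  apply filterlim_locally. intros e.
  pose proof atan_pinfty as H. apply filterlim_locally with (eps := e) in H.
  destruct H as [M HM]. exists (- M). intros x Hx.
  specialize (HM (- x) ltac:(lra)). apply ball_R in HM. apply ball_R.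
  rewrite atan_opp in HM. replace (atan x - - (PI / 2)) with (- (- atan x - PI / 2)) by ring.
  rewrite Rabs_Ropp; auto.
Qed.

Record NF (Fa Fb : (R -> Prop) -> Prop) : Prop := {
  NF_a : ProperFilter Fa ;
  NF_b : ProperFilter Fb ;
  NF_la : exists al, filterlim atan Fa (locally al) ;
  NF_lb : exists be, filterlim atan Fb (locally be) ;
  NF_le : filter_prod Fa Fb (fun ab => fst ab <= snd ab) }.

Lemma NF_half : NF (at_point 0) (Rbar_locally p_infty).
Proof.
  split.
  - apply at_point_filter.
  - apply Rbar_locally_filter.
  - exists (atan 0). intros P HP. unfold filtermap, at_point. apply locally_singleton. auto.
  - exists (PI/2). apply atan_pinfty.
  - exists (fun x => x = 0) (fun y => 0 < y). reflexivity. exists 0. auto.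
    intros x y -> Hy. simpl; lra.
Qed.

Lemma NF_full : NF (Rbar_locally m_infty) (Rbar_locally p_infty).
Proof.
  split.
  - apply Rbar_locally_filter.
  - apply Rbar_locally_filter.
  - exists (- (PI/2)). apply atan_minfty.
  - exists (PI/2). apply atan_pinfty.
  - exists (fun x => x < 0) (fun y => 0 < y). exists 0. auto. exists 0. auto.
    intros x y Hx Hy. simpl; lra.
Qed.

Lemma EX (Fa Fb : (R -> Prop) -> Prop) (HN : NF Fa Fb) (f : R -> R) (C : R) :
  (forall x, continuous f x) -> (forall x, Rabs (f x) <= C * gg x) ->
  is_RInt_gen f Fa Fb (RInt_gen f Fa Fb).
Proof.
  intros Hc Hb. destruct HN as [HFa HFb [al Hal] [be Hbe] Hle].
  assert (HC : 0 <= C).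
  { specialize (Hb 0). pose proof (gg_pos 0). pose proof (Rabs_pos (f 0)).
    destruct (Rle_or_lt 0 C); auto. nra. }
  assert (Hex : forall a b, ex_RInt f a b) by (intros; apply ex_RInt_cont; auto).
  assert (HL : exists l, filterlim (fun ab : R * R => RInt f (fst ab) (snd ab))
                 (filter_prod Fa Fb) (locally l)).
  { apply (filterlim_locally_cauchy (F := filter_prod Fa Fb)).
    intros eps.
    assert (Hd : 0 < eps / (4 * (C + 1))).
    { apply Rdiv_lt_0_compat. apply cond_pos. lra. }
    set (d := mkposreal _ Hd).
    apply filterlim_locally with (eps := d) in Hal.
    apply filterlim_locally with (eps := d) in Hbe.
    exists (fun ab => ball al d (atan (fst ab)) /\ ball be d (atan (snd ab))).
    split.
    - exists (fun a => ball al d (atan a)) (fun b => ball be d (atan b)); auto.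
    - intros [a b] [a' b'] [Ha Hb1] [Ha' Hb1']. simpl in *.
      change (Rabs (atan a - al) < d) in Ha. change (Rabs (atan b - be) < d) in Hb1.
      change (Rabs (atan a' - al) < d) in Ha'. change (Rabs (atan b' - be) < d) in Hb1'.
      apply ball_R.
      rewrite <- (RInt_Chasles f a' a b') by auto.
      rewrite <- (RInt_Chasles f a b b') by auto.
      unfold plus; simpl.
      replace (RInt f a' a + (RInt f a b + RInt f b b') - RInt f a b)
        with (RInt f a' a + RInt f b b') by ring.
      eapply Rle_lt_trans. apply Rabs_triang.
      pose proof (RInt_bound f C a' a Hc Hb).
      pose proof (RInt_bound f C b b' Hc Hb).
      assert (Rabs (atan a - atan a') < 2 * d).
      { replace (atan a - atan a') with ((atan a - al) - (atan a' - al)) by ring.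
        eapply Rle_lt_trans. apply Rabs_triang. rewrite Rabs_Ropp. lra. }
      assert (Rabs (atan b' - atan b) < 2 * d).
      { replace (atan b' - atan b) with ((atan b' - be) - (atan b - be)) by ring.
        eapply Rle_lt_trans. apply Rabs_triang. rewrite Rabs_Ropp. lra. }
      assert (C * (2 * d) < eps / 2).
      { unfold d; simpl. pose proof (cond_pos eps).
        replace (C * (2 * (eps / (4 * (C + 1))))) with ((eps / 2) * (C / (C + 1))) by (field; lra).
        rewrite <- (Rmult_1_r (eps / 2)) at 2. apply Rmult_lt_compat_l. lra.
        apply Rmult_lt_reg_r with (C + 1). lra. unfold Rdiv. rewrite Rmult_assoc, Rinv_l by lra. lra. }
      assert (C * Rabs (atan a - atan a') <= C * (2 * d)) by (apply Rmult_le_compat_l; lra).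
      assert (C * Rabs (atan b' - atan b) <= C * (2 * d)) by (apply Rmult_le_compat_l; lra).
      lra. }
  destruct HL as [l Hl].
  assert (Hi : is_RInt_gen f Fa Fb l).
  { apply (filterlimi_lim_ext (fun ab : R * R => RInt f (fst ab) (snd ab))).
    intros [a b]; simpl. apply (RInt_correct (V:=R_CompleteNormedModule)); auto. exact Hl. }
  rewrite (is_RInt_gen_unique f l Hi). exact Hi.
Qed.

Definition IG (Fa Fb : (R -> Prop) -> Prop) := RInt_gen gg Fa Fb.

Lemma IG_is (Fa Fb : (R -> Prop) -> Prop) (HN : NF Fa Fb) : is_RInt_gen gg Fa Fb (IG Fa Fb).
Proof.
  apply (EX Fa Fb HN gg 1). apply gg_cont.
  intros x. rewrite Rmult_1_l, Rabs_pos_eq. lra. left; apply gg_pos.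
Qed.

Lemma BOUND (Fa Fb : (R -> Prop) -> Prop) (HN : NF Fa Fb) (f : R -> R) (C l : R) :
  is_RInt_gen f Fa Fb l -> (forall x, Rabs (f x) <= C * gg x) -> Rabs l <= C * IG Fa Fb.
Proof.
  intros Hl Hb. pose proof HN as [HFa HFb _ _ Hle].
  apply (RInt_gen_norm (V:=R_CompleteNormedModule) (Fa:=Fa) (Fb:=Fb) f (fun x => C * gg x) l (C * IG Fa Fb)); auto.
  - apply filter_forall. intros ab x _; apply Hb.
  - apply (is_RInt_gen_scal gg C). apply IG_is; auto.
Qed.

Lemma NONNEG (Fa Fb : (R -> Prop) -> Prop) (HN : NF Fa Fb) (f : R -> R) (l : R) :
  is_RInt_gen f Fa Fb l -> (forall x, 0 <= f x) -> 0 <= l.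
Proof.
  intros Hl Hb. pose proof HN as [HFa HFb _ _ Hle].
  assert (H := RInt_gen_norm (V:=R_CompleteNormedModule) (Fa:=Fa) (Fb:=Fb) (fun y => scal 0 (f y)) f (scal 0 l) l Hle).
  assert (E : scal 0 l = 0) by (unfold scal; simpl; unfold mult; simpl; ring).
  rewrite E in H. 
  assert (Hn : norm (0:R_CompleteNormedModule) = 0).
  { unfold norm; simpl. apply Rabs_R0. }
  rewrite <- Hn. apply H.
  - apply filter_forall. intros ab x _. unfold scal; simpl; unfold mult; simpl.
    unfold norm; simpl. unfold abs; simpl. rewrite Rmult_0_l, Rabs_R0; auto.
  - pose proof (is_RInt_gen_scal (Fa:=Fa) (Fb:=Fb) f 0 l Hl) as H2. unfold scal in H2 |- *. simpl in *. unfold mult in *; simpl in *. rewrite Rmult_0_l in H2. exact H2.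
  - exact Hl.
Qed.

Lemma taylor2 (f df ddf : R -> R) (s0 h M : R) :
  (forall s, Rabs (s - s0) <= Rabs h ->
     is_derive f s (df s) /\ is_derive df s (ddf s) /\ Rabs (ddf s) <= M) ->
  Rabs (f (s0 + h) - f s0 - h * df s0) <= M * h ^ 2.
Proof.
  intros H.
  assert (HM : 0 <= M).
  { destruct (H s0) as [_ [_ Hm]]. rewrite Rminus_diag, Rabs_R0. apply Rabs_pos.
    pose proof (Rabs_pos (ddf s0)); lra. }
  assert (H1 : forall c, Rabs (c - s0) <= Rabs h -> Rabs (df c - df s0) <= M * Rabs (c - s0)).
  { intros c Hc.
    destruct (MVT_cor4 df ddf s0 (Rabs h)) with (b := c) as [c' [Ec Hc']]; auto.
    - intros c0 Hc0. apply H; auto.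
    - rewrite Ec, Rabs_mult. apply Rmult_le_compat_r. apply Rabs_pos.
      apply H. lra. }
  destruct (MVT_cor4 (fun s => f s - s * df s0) (fun s => df s - df s0) s0 (Rabs h)) with (b := s0 + h)
    as [c [Ec Hc]].
  - intros c Hc. apply (is_derive_minus f (fun s => s * df s0)).
    apply H; auto.
    auto_derive. auto. ring.
  - replace (s0 + h - s0) with h by ring; lra.
  - replace (f (s0 + h) - f s0 - h * df s0) with
      (f (s0 + h) - (s0 + h) * df s0 - (f s0 - s0 * df s0)) by ring.
    rewrite Ec. replace (s0 + h - s0) with h in * by ring.
    rewrite Rabs_mult. 
    assert (Rabs (df c - df s0) <= M * Rabs h).
    { eapply Rle_trans. apply H1; lra. apply Rmult_le_compat_l; lra. }
    replace (M * h ^ 2) with ((M * Rabs h) * Rabs h).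
    apply Rmult_le_compat_r; auto. apply Rabs_pos.
    rewrite Rmult_assoc, <- Rabs_mult. rewrite Rabs_pos_eq by nra. ring.
Qed.

Lemma IG_nonneg Fa Fb (HN : NF Fa Fb) : 0 <= IG Fa Fb.
Proof. apply (NONNEG Fa Fb HN gg). apply IG_is; auto. intros; left; apply gg_pos. Qed.

Lemma L2 (Fa Fb : (R -> Prop) -> Prop) (HN : NF Fa Fb) (F dF ddF : R -> R -> R) (s0 dl C : R) :
  0 < dl ->
  (forall s x, Rabs (s - s0) < dl -> is_derive (fun s => F s x) s (dF s x)) ->
  (forall s x, Rabs (s - s0) < dl -> is_derive (fun s => dF s x) s (ddF s x)) ->
  (forall s x, Rabs (s - s0) < dl ->
     Rabs (F s x) <= C * gg x /\ Rabs (dF s x) <= C * gg x /\ Rabs (ddF s x) <= C * gg x) ->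
  (forall s x, Rabs (s - s0) < dl -> continuous (F s) x /\ continuous (dF s) x) ->
  is_derive (fun s => RInt_gen (F s) Fa Fb) s0 (RInt_gen (dF s0) Fa Fb).
Proof.
  intros Hdl HD1 HD2 HB HC.
  pose proof HN as [HFa HFb _ _ _].
  assert (HC0 : 0 <= C).
  { destruct (HB s0 0) as [H _]. rewrite Rminus_diag, Rabs_R0; auto.
    pose proof (gg_pos 0). pose proof (Rabs_pos (F s0 0)).
    destruct (Rle_or_lt 0 C); auto. nra. }
  pose proof (IG_nonneg Fa Fb HN) as HIG.
  assert (HF : forall s, Rabs (s - s0) < dl -> is_RInt_gen (F s) Fa Fb (RInt_gen (F s) Fa Fb)).
  { intros s Hs. apply (EX Fa Fb HN _ C). intros; apply HC; auto. intros; apply HB; auto. }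
  assert (HdF : is_RInt_gen (dF s0) Fa Fb (RInt_gen (dF s0) Fa Fb)).
  { apply (EX Fa Fb HN _ C). intros; apply HC; auto. rewrite Rminus_diag, Rabs_R0; auto.
    intros; apply HB; auto. rewrite Rminus_diag, Rabs_R0; auto. }
  apply is_derive_Reals. intros eps Heps.
  set (K := C * IG Fa Fb + 1).
  assert (HK : 0 < K) by (unfold K; nra).
  assert (Hd' : 0 < Rmin (dl / 2) (eps / K)).
  { apply Rmin_pos. lra. apply Rdiv_lt_0_compat; auto. }
  exists (mkposreal _ Hd'). intros h Hh0 Hh. simpl in Hh.
  assert (Hh1 : Rabs h < dl).
  { eapply Rlt_le_trans. apply Hh. eapply Rle_trans. apply Rmin_l. lra. }
  assert (Hh2 : Rabs h < eps / K).
  { eapply Rlt_le_trans. apply Hh. apply Rmin_r. }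
  set (I1 := RInt_gen (F (s0 + h)) Fa Fb).
  set (I0 := RInt_gen (F s0) Fa Fb).
  set (Id := RInt_gen (dF s0) Fa Fb).
  assert (Hk : is_RInt_gen (fun x => F (s0 + h) x - F s0 x - h * dF s0 x) Fa Fb (I1 - I0 - h * Id)).
  { apply (is_RInt_gen_minus (V:=R_NormedModule) (Fa:=Fa) (Fb:=Fb) (fun x => F (s0 + h) x - F s0 x) (fun x => h * dF s0 x)).
    apply (is_RInt_gen_minus (V:=R_NormedModule) (Fa:=Fa) (Fb:=Fb)).
    apply HF. replace (s0 + h - s0) with h by ring. auto.
    apply HF. rewrite Rminus_diag, Rabs_R0; auto.
    apply (is_RInt_gen_scal (V:=R_NormedModule) (Fa:=Fa) (Fb:=Fb)). auto. }
  assert (Hbk : Rabs (I1 - I0 - h * Id) <= (C * h ^ 2) * IG Fa Fb).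
  { pose proof (BOUND Fa Fb HN _ (C * h ^ 2) _ Hk) as HB'. apply HB'. intros x.
    replace (C * h ^ 2 * gg x) with ((C * gg x) * h ^ 2) by ring.
    pose proof (taylor2 (fun s => F s x) (fun s => dF s x) (fun s => ddF s x) s0 h (C * gg x)) as T2.
    simpl in T2. apply T2.
    intros s Hs. assert (Hs' : Rabs (s - s0) < dl) by lra.
    destruct (HB s x Hs') as [_ [_ H3]].
    split. apply (HD1 s x Hs'). split. apply (HD2 s x Hs'). exact H3. }
  replace ((I1 - I0) / h - Id) with ((I1 - I0 - h * Id) / h) by (field; auto).
  unfold Rdiv. rewrite Rabs_mult, Rabs_inv.
  assert (Hah : 0 < Rabs h) by (apply Rabs_pos_lt; auto).
  apply Rmult_lt_reg_r with (Rabs h); auto.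
  rewrite Rmult_assoc, Rinv_l, Rmult_1_r by lra.
  eapply Rle_lt_trans. apply Hbk.
  replace (C * h ^ 2 * IG Fa Fb) with ((C * IG Fa Fb) * Rabs h * Rabs h).
  2:{ rewrite Rmult_assoc, <- Rabs_mult. rewrite Rabs_pos_eq by nra. ring. }
  apply Rmult_lt_compat_r; auto.
  assert (Rabs h * K < eps).
  { apply Rmult_lt_reg_r with (/ K). apply Rinv_0_lt_compat; auto.
    rewrite Rmult_assoc, Rinv_r, Rmult_1_r by lra. auto. }
  unfold K in H. nra.
Qed.

Inductive dexp := Bas (i : nat) (l : list dir) | Cst (c : R) | Rco | Add (e1 e2 : dexp) | Mul (e1 e2 : dexp).

Fixpoint sem (B : nat -> fn3) (e : dexp) : fn3 :=
  match e with
  | Bas i l => Dmulti l (B i)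
  | Cst c => fun _ _ _ => c
  | Rco => fun _ r _ => r
  | Add e1 e2 => fun t r z => sem B e1 t r z + sem B e2 t r z
  | Mul e1 e2 => fun t r z => sem B e1 t r z * sem B e2 t r z
  end.

Definition dir_eqb (d1 d2 : dir) : bool :=
  match d1, d2 with dirT, dirT | dirR, dirR | dirZ, dirZ => true | _, _ => false end.

Fixpoint dsyn (d : dir) (e : dexp) : dexp :=
  match e with
  | Bas i l => Bas i (d :: l)
  | Cst _ => Cst 0
  | Rco => match d with dirR => Cst 1 | _ => Cst 0 end
  | Add e1 e2 => Add (dsyn d e1) (dsyn d e2)
  | Mul e1 e2 => Add (Mul (dsyn d e1) e2) (Mul e1 (dsyn d e2))
  end.

Definition is_partial (d : dir) (f : fn3) (t r z v : R) : Prop :=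
  match d with
  | dirT => is_derive (fun s => f s r z) t v
  | dirR => is_derive (fun s => f t s z) r v
  | dirZ => is_derive (fun s => f t r s) z v
  end.

Lemma is_partial_Dop d f t r z : ex_partial d f t r z -> is_partial d f t r z (Dop d f t r z).
Proof. destruct d; simpl; intros H; apply Derive_correct; auto. Qed.

Lemma is_partial_unique d f t r z v : is_partial d f t r z v -> Dop d f t r z = v.
Proof. destruct d; simpl; intros H; apply is_derive_unique; auto. Qed.

Lemma isd_const (c x : R) : is_derive (fun _ : R => c) x 0.
Proof. apply is_derive_Reals. apply derivable_pt_lim_const. Qed.
Lemma isd_id (x : R) : is_derive (fun s : R => s) x 1.
Proof. apply is_derive_Reals. apply derivable_pt_lim_id. Qed.
Lemma isd_plus (f g : R -> R) x a b : is_derive f x a -> is_derive g x b ->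
  is_derive (fun s => f s + g s) x (a + b).
Proof. rewrite !is_derive_Reals. intros; apply (derivable_pt_lim_plus f g); auto. Qed.
Lemma isd_mult (f g : R -> R) x a b : is_derive f x a -> is_derive g x b ->
  is_derive (fun s => f s * g s) x (a * g x + f x * b).
Proof. rewrite !is_derive_Reals. intros; apply (derivable_pt_lim_mult f g); auto. Qed.

Lemma dsyn_ok (B : nat -> fn3) (T : R) (HB : forall i, smooth_slab T (B i)) e d t r z :
  0 < t < T -> is_partial d (sem B e) t r z (sem B (dsyn d e) t r z).
Proof.
  intros Ht. induction e; simpl.
  - apply is_partial_Dop. apply HB; auto.
  - destruct d; simpl; apply isd_const.
  - destruct d; simpl. apply isd_const. apply isd_id. apply isd_const.
  - destruct d; simpl in *; apply isd_plus; auto.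
  - destruct d; simpl in *; exact (isd_mult _ _ _ _ _ IHe1 IHe2).
Qed.

Lemma cont_ok (B : nat -> fn3) (T : R) (HB : forall i, smooth_slab T (B i)) e t r z :
  0 < t < T -> cont3 (sem B e) t r z.
Proof.
  intros Ht. unfold cont3. induction e; simpl.
  - apply HB; auto.
  - apply continuous_const.
  - apply (continuous_comp (fun p : R * R * R => fst p) (fun q : R * R => snd q)).
    apply continuous_fst. apply continuous_snd.
  - apply (continuous_plus (K:=R_AbsRing) (V:=R_NormedModule)); auto.
  - apply (continuous_mult (K:=R_AbsRing)); auto.
Qed.

Lemma cont3_ball f t r z : cont3 f t r z ->
  forall eps, 0 < eps -> exists dl, 0 < dl /\ forall t' r' z',
    Rabs (t' - t) < dl -> Rabs (r' - r) < dl -> Rabs (z' - z) < dl ->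
    Rabs (f t' r' z' - f t r z) < eps.
Proof.
  intros H eps He. unfold cont3 in H.
  apply filterlim_locally with (eps := mkposreal _ He) in H.
  destruct H as [dl Hdl]. exists dl. split. apply cond_pos.
  intros t' r' z' H1 H2 H3. apply (Hdl ((t', r'), z')).
  split; [split|]; simpl; auto.
Qed.

Fixpoint dec (e : dexp) : Prop :=
  match e with
  | Bas _ _ => True
  | Cst _ => False
  | Rco => False
  | Add e1 e2 => dec e1 /\ dec e2
  | Mul e1 e2 => dec e1 \/ dec e2
  end.

Lemma dec_dsyn d e : dec e -> dec (dsyn d e).
Proof.
  induction e; simpl; auto; try tauto.
Qed.

Definition XX (r z : R) := 1 + r ^ 2 + z ^ 2.

Lemma XX_ge1 r z : 1 <= XX r z.
Proof. unfold XX. nra. Qed.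

Lemma XX_pow_pos r z k : 0 < XX r z ^ k.
Proof. apply pow_lt. pose proof (XX_ge1 r z); lra. Qed.

Lemma XX_pow_mono r z k1 k2 : (k1 <= k2)%nat -> XX r z ^ k1 <= XX r z ^ k2.
Proof. intros. apply Rle_pow; auto. apply XX_ge1. Qed.

Lemma poly_ok (B : nat -> fn3) (T a b : R) (Ha : 0 < a) (Hab : a <= b) (Hb : b < T)
  (HD : forall i, rapid_decay T (B i)) e :
  exists C k, 0 <= C /\ forall t r z, a <= t <= b -> Rabs (sem B e t r z) <= C * XX r z ^ k.
Proof.
  induction e; simpl.
  - destruct (HD i l 0%nat a b Ha Hab Hb) as [C HC].
    exists C, 0%nat. split.
    + specialize (HC a 0 0 ltac:(lra)). simpl in HC. pose proof (Rabs_pos (Dmulti l (B i) a 0 0)). lra.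
    + intros t r z Ht. specialize (HC t r z Ht). simpl in *. lra.
  - exists (Rabs c), 0%nat. split. apply Rabs_pos. intros; simpl; lra.
  - exists 1, 1%nat. split. lra. intros t r z _. unfold XX. simpl.
    destruct (Rabs_pos r); apply Rabs_le; nra.
  - destruct IHe1 as [C1 [k1 [H1 HC1]]]. destruct IHe2 as [C2 [k2 [H2 HC2]]].
    exists (C1 + C2), (k1 + k2)%nat. split. lra. intros t r z Ht.
    eapply Rle_trans. apply Rabs_triang.
    pose proof (HC1 t r z Ht). pose proof (HC2 t r z Ht).
    pose proof (XX_pow_mono r z k1 (k1 + k2) ltac:(lia)).
    pose proof (XX_pow_mono r z k2 (k1 + k2) ltac:(lia)).
    nra.
  - destruct IHe1 as [C1 [k1 [H1 HC1]]]. destruct IHe2 as [C2 [k2 [H2 HC2]]].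
    exists (C1 * C2), (k1 + k2)%nat. split. nra. intros t r z Ht.
    rewrite Rabs_mult, pow_add.
    pose proof (HC1 t r z Ht). pose proof (HC2 t r z Ht).
    replace (C1 * C2 * (XX r z ^ k1 * XX r z ^ k2)) with ((C1 * XX r z ^ k1) * (C2 * XX r z ^ k2)) by ring.
    apply Rmult_le_compat; auto; apply Rabs_pos.
Qed.

Lemma dec_ok (B : nat -> fn3) (T a b : R) (Ha : 0 < a) (Hab : a <= b) (Hb : b < T)
  (HD : forall i, rapid_decay T (B i)) e : dec e ->
  forall k, exists C, 0 <= C /\ forall t r z, a <= t <= b -> Rabs (sem B e t r z) * XX r z ^ k <= C.
Proof.
  induction e; simpl; intros He k; try tauto.
  - destruct (HD i l k a b Ha Hab Hb) as [C HC].
    exists C. split.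
    + specialize (HC a 0 0 ltac:(lra)). pose proof (Rabs_pos (Dmulti l (B i) a 0 0)).
      pose proof (XX_pow_pos 0 0 k). unfold XX in *. nra.
    + intros t r z Ht. specialize (HC t r z Ht). unfold XX. lra.
  - destruct He as [H1 H2]. destruct (IHe1 H1 k) as [C1 [P1 HC1]]. destruct (IHe2 H2 k) as [C2 [P2 HC2]].
    exists (C1 + C2). split. lra. intros t r z Ht.
    pose proof (HC1 t r z Ht). pose proof (HC2 t r z Ht). pose proof (XX_pow_pos r z k).
    pose proof (Rabs_triang (sem B e1 t r z) (sem B e2 t r z)). nra.
  - destruct He as [H1|H2].
    + destruct (poly_ok B T a b Ha Hab Hb HD e2) as [C2 [k2 [P2 HC2]]].
      destruct (IHe1 H1 (k + k2)%nat) as [C1 [P1 HC1]].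
      exists (C1 * C2). split. nra. intros t r z Ht.
      pose proof (HC1 t r z Ht). pose proof (HC2 t r z Ht).
      rewrite pow_add in H. rewrite Rabs_mult.
      pose proof (XX_pow_pos r z k). pose proof (XX_pow_pos r z k2).
      pose proof (Rabs_pos (sem B e1 t r z)). pose proof (Rabs_pos (sem B e2 t r z)).
      assert (E : Rabs (sem B e1 t r z) * Rabs (sem B e2 t r z) * XX r z ^ k
         <= C2 * (Rabs (sem B e1 t r z) * (XX r z ^ k * XX r z ^ k2))).
      { replace (C2 * (Rabs (sem B e1 t r z) * (XX r z ^ k * XX r z ^ k2)))
          with ((Rabs (sem B e1 t r z) * XX r z ^ k) * (C2 * XX r z ^ k2)) by ring.
        replace (Rabs (sem B e1 t r z) * Rabs (sem B e2 t r z) * XX r z ^ k)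
          with ((Rabs (sem B e1 t r z) * XX r z ^ k) * Rabs (sem B e2 t r z)) by ring.
        apply Rmult_le_compat_l; auto. nra. }
      nra.
    + destruct (poly_ok B T a b Ha Hab Hb HD e1) as [C1 [k1 [P1 HC1]]].
      destruct (IHe2 H2 (k + k1)%nat) as [C2 [P2 HC2]].
      exists (C1 * C2). split. nra. intros t r z Ht.
      pose proof (HC1 t r z Ht). pose proof (HC2 t r z Ht).
      rewrite pow_add in H0. rewrite Rabs_mult.
      pose proof (XX_pow_pos r z k). pose proof (XX_pow_pos r z k1).
      pose proof (Rabs_pos (sem B e1 t r z)). pose proof (Rabs_pos (sem B e2 t r z)).
      assert (E : Rabs (sem B e1 t r z) * Rabs (sem B e2 t r z) * XX r z ^ k
         <= C1 * (Rabs (sem B e2 t r z) * (XX r z ^ k * XX r z ^ k1))).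
      { replace (C1 * (Rabs (sem B e2 t r z) * (XX r z ^ k * XX r z ^ k1)))
          with ((Rabs (sem B e2 t r z) * XX r z ^ k) * (C1 * XX r z ^ k1)) by ring.
        replace (Rabs (sem B e1 t r z) * Rabs (sem B e2 t r z) * XX r z ^ k)
          with ((Rabs (sem B e2 t r z) * XX r z ^ k) * Rabs (sem B e1 t r z)) by ring.
        apply Rmult_le_compat_l; auto. nra. }
      nra.
Qed.

Definition pw (n r : R) : R := if Rlt_dec 0 r then Rpower r n else 0.

Lemma pw_pos_eq n r : 0 < r -> pw n r = Rpower r n.
Proof. intros H; unfold pw; destruct (Rlt_dec 0 r); auto; lra. Qed.

Lemma pw_nonpos n r : r <= 0 -> pw n r = 0.
Proof. intros H; unfold pw; destruct (Rlt_dec 0 r); auto; lra. Qed.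

Lemma pw_nonneg n r : 0 <= pw n r.
Proof. unfold pw; destruct (Rlt_dec 0 r). unfold Rpower. left; apply exp_pos. lra. Qed.

Lemma exp_le_mono x y : x <= y -> exp x <= exp y.
Proof. intros [H|H]. left; apply exp_increasing; auto. subst; lra. Qed.

Lemma Rpower_le1 r m : 0 < r <= 1 -> 0 <= m -> Rpower r m <= 1.
Proof.
  intros Hr Hm. unfold Rpower. rewrite <- exp_0. apply exp_le_mono.
  assert (ln r <= 0). { rewrite <- ln_1. apply ln_le; lra. }
  nra.
Qed.

Lemma pw_bound n r : 0 <= n <= 7 -> pw n r <= (1 + r ^ 2) ^ 4.
Proof.
  intros Hn. unfold pw. destruct (Rlt_dec 0 r).
  - destruct (Rle_or_lt r 1).
    + eapply Rle_trans. apply Rpower_le1; lra.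
      apply pow_R1_Rle. nra.
    + eapply Rle_trans. apply (Rle_Rpower r n 7); lra.
      replace 7 with (INR 7) by (simpl; ring). rewrite Rpower_pow by lra.
      assert (r ^ 7 <= r ^ 8). { replace (r ^ 8) with (r * r ^ 7) by ring.
        pose proof (pow_lt r 7 ltac:(lra)). nra. }
      eapply Rle_trans. apply H0. replace (r ^ 8) with ((r ^ 2) ^ 4) by ring.
      apply pow_incr. nra.
  - apply pow_le. nra.
Qed.

Lemma pw_small n r : 1 <= n -> 0 < r <= 1 -> pw n r <= r.
Proof.
  intros Hn Hr. rewrite pw_pos_eq by lra.
  replace n with (1 + (n - 1)) by ring. rewrite Rpower_plus, Rpower_1 by lra.
  pose proof (Rpower_le1 r (n - 1) Hr ltac:(lra)).
  assert (0 < Rpower r (n - 1)) by (unfold Rpower; apply exp_pos). nra.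
Qed.

Lemma Rpower_cont n r : 0 < r -> continuous (fun s => Rpower s n) r.
Proof.
  intros Hr. apply continuity_pt_filterlim. apply derivable_continuous_pt.
  exists (n * Rpower r (n - 1)). apply derivable_pt_lim_power; auto.
Qed.

Lemma pw_cont n r : 1 <= n -> continuous (pw n) r.
Proof.
  intros Hn. destruct (Rlt_dec 0 r).
  - apply (continuous_ext_loc (pw n) (fun s => Rpower s n)).
    exists (mkposreal _ r0). intros y Hy. ballR Hy. simpl in Hy.
    rewrite pw_pos_eq; auto. destruct (Rabs_def2 _ _ Hy); lra.
    apply Rpower_cont; auto.
  - destruct (Rlt_dec r 0).
    + apply (continuous_ext_loc (pw n) (fun s => 0)).
      assert (Hr : 0 < - r) by lra.
      exists (mkposreal _ Hr). intros y Hy. ballR Hy. simpl in Hy.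
      rewrite pw_nonpos; auto. destruct (Rabs_def2 _ _ Hy); lra.
      apply continuous_const.
    + assert (r = 0) by lra. subst r.
      apply filterlim_locally. intros eps.
      assert (He : 0 < Rmin 1 eps) by (apply Rmin_pos; [lra| apply cond_pos]).
      exists (mkposreal _ He). intros y Hy. ballR Hy. simpl in Hy. apply ball_R.
      rewrite (pw_nonpos n 0) by lra. rewrite Rminus_0_r in *.
      pose proof (Rmin_l 1 eps). pose proof (Rmin_r 1 eps).
      destruct (Rle_or_lt y 0).
      * rewrite pw_nonpos, Rabs_R0 by auto. apply cond_pos.
      * rewrite Rabs_pos_eq by apply pw_nonneg.
        rewrite Rabs_pos_eq in Hy by lra.
        pose proof (pw_small n y Hn ltac:(lra)). lra.
Qed.

Lemma pw_derive n r : 0 < r -> is_derive (pw n) r (n / r * pw n r).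
Proof.
  intros Hr. apply (is_derive_ext_loc (fun s => Rpower s n)).
  - exists (mkposreal _ Hr). intros y Hy. ballR Hy. simpl in Hy.
    rewrite pw_pos_eq; auto. destruct (Rabs_def2 _ _ Hy); lra.
  - rewrite pw_pos_eq by auto. apply is_derive_Reals.
    replace (n / r * Rpower r n) with (n * Rpower r (n - 1)).
    apply derivable_pt_lim_power; auto.
    replace (Rpower r n) with (Rpower r ((n - 1) + 1)) by (f_equal; ring).
    rewrite Rpower_plus, Rpower_1 by auto.
    field. lra.
Qed.

Lemma wbound (B : nat -> fn3) (T a b : R) (Ha : 0 < a) (Hab : a <= b) (Hb : b < T)
  (HD : forall i, rapid_decay T (B i)) (n : R) (Hn : 0 <= n <= 7) e : dec e ->
  exists C, 0 <= C /\ forall t r z, a <= t <= b ->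
    Rabs (sem B e t r z * pw n r) <= C * gg r * gg z.
Proof.
  intros He. destruct (dec_ok B T a b Ha Hab Hb HD e He 6) as [C [HC0 HC]].
  exists C. split; auto. intros t r z Ht. specialize (HC t r z Ht).
  set (Y := 1 + r ^ 2). set (Z := 1 + z ^ 2).
  assert (HY : 1 <= Y) by (unfold Y; nra). assert (HZ : 1 <= Z) by (unfold Z; nra).
  assert (HYX : Y <= XX r z) by (unfold Y, XX; nra).
  assert (HZX : Z <= XX r z) by (unfold Z, XX; nra).
  pose proof (pw_bound n r Hn) as Hp. fold Y in Hp.
  pose proof (pw_nonneg n r) as Hp0.
  assert (H5 : Y ^ 5 <= XX r z ^ 5) by (apply pow_incr; lra).
  assert (HY5 : 0 < Y ^ 5) by (apply pow_lt; lra).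
  assert (H6 : pw n r * Y * Z <= XX r z ^ 6).
  { replace (XX r z ^ 6) with (XX r z ^ 5 * XX r z) by ring.
    assert (pw n r * Y <= Y ^ 5) by (replace (Y ^ 5) with (Y ^ 4 * Y) by ring; nra).
    pose proof (XX_pow_pos r z 5).
    apply Rle_trans with (Y ^ 5 * Z). nra. apply Rmult_le_compat; lra. }
  rewrite Rabs_mult, (Rabs_pos_eq (pw n r)) by auto.
  unfold gg. fold Y Z.
  pose proof (Rabs_pos (sem B e t r z)).
  assert (Rabs (sem B e t r z) * pw n r * (Y * Z) <= C).
  { eapply Rle_trans. 2: apply HC.
    replace (Rabs (sem B e t r z) * pw n r * (Y * Z)) with (Rabs (sem B e t r z) * (pw n r * Y * Z)) by ring.
    apply Rmult_le_compat_l; auto. }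
  apply Rmult_le_reg_r with (Y * Z). nra.
  replace (C * / Y * / Z * (Y * Z)) with C by (field; lra). auto.
Qed.

Lemma cont3_t f t r z : cont3 f t r z -> continuous (fun s => f s r z) t.
Proof.
  intros H. apply filterlim_locally. intros eps.
  destruct (cont3_ball f t r z H eps (cond_pos eps)) as [dl [Hdl Hd]].
  exists (mkposreal _ Hdl). intros y Hy. ballR Hy. apply ball_R. apply Hd; simpl in *; auto;
  rewrite Rminus_diag, Rabs_R0; auto.
Qed.

Lemma cont3_r f t r z : cont3 f t r z -> continuous (fun s => f t s z) r.
Proof.
  intros H. apply filterlim_locally. intros eps.
  destruct (cont3_ball f t r z H eps (cond_pos eps)) as [dl [Hdl Hd]].
  exists (mkposreal _ Hdl). intros y Hy. ballR Hy. apply ball_R. apply Hd; simpl in *; auto;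
  rewrite Rminus_diag, Rabs_R0; auto.
Qed.

Lemma cont3_z f t r z : cont3 f t r z -> continuous (fun s => f t r s) z.
Proof.
  intros H. apply filterlim_locally. intros eps.
  destruct (cont3_ball f t r z H eps (cond_pos eps)) as [dl [Hdl Hd]].
  exists (mkposreal _ Hdl). intros y Hy. ballR Hy. apply ball_R. apply Hd; simpl in *; auto;
  rewrite Rminus_diag, Rabs_R0; auto.
Qed.

Lemma cont_w (B : nat -> fn3) (T : R) (HB : forall i, smooth_slab T (B i)) n (Hn : 1 <= n) e t z r :
  0 < t < T -> continuous (fun s => sem B e t s z * pw n s) r.
Proof.
  intros Ht. apply (continuous_mult (K:=R_AbsRing) (fun s => sem B e t s z) (pw n)).
  apply cont3_r. apply cont_ok with T; auto. apply pw_cont; auto.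
Qed.

Definition Gi (B : nat -> fn3) (n : R) (e : dexp) (t z : R) : R :=
  RInt_gen (fun r => sem B e t r z * pw n r) (at_point 0) (Rbar_locally p_infty).
Definition Ho (B : nat -> fn3) (n : R) (e : dexp) (t : R) : R :=
  RInt_gen (fun z => Gi B n e t z) (Rbar_locally m_infty) (Rbar_locally p_infty).

Record Hyp (B : nat -> fn3) (T a b n : R) : Prop := {
  hB : forall i, smooth_slab T (B i);
  hD : forall i, rapid_decay T (B i);
  ha : 0 < a; hab : a <= b; hb : b < T;
  hn : 1 <= n <= 7 }.

Lemma gg_le1' x : gg x <= 1.
Proof. apply gg_le1. Qed.

Lemma G_is B T a b n (H : Hyp B T a b n) e t z : dec e -> a <= t <= b ->
  is_RInt_gen (fun r => sem B e t r z * pw n r) (at_point 0) (Rbar_locally p_infty) (Gi B n e t z).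
Proof.
  intros He Ht. destruct H.
  destruct (wbound B T a b ha0 hab0 hb0 hD0 n ltac:(lra) e He) as [C [HC0 HC]].
  apply (EX _ _ NF_half _ (C * gg z)).
  - intros r. apply cont_w with T; auto. lra. lra.
  - intros r. replace (C * gg z * gg r) with (C * gg r * gg z) by ring. apply HC; auto.
Qed.

Lemma G_bound B T a b n (H : Hyp B T a b n) e : dec e ->
  exists C, 0 <= C /\ forall t z, a <= t <= b -> Rabs (Gi B n e t z) <= C * gg z.
Proof.
  intros He. pose proof H as [hB hD ha hab hb hn].
  destruct (wbound B T a b ha hab hb hD n ltac:(lra) e He) as [C [HC0 HC]].
  exists (C * IG (at_point 0) (Rbar_locally p_infty)). split.
  apply Rmult_le_pos; auto. apply IG_nonneg. apply NF_half.
  intros t z Ht.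
  eapply Rle_trans. apply (BOUND _ _ NF_half (fun r => sem B e t r z * pw n r) (C * gg z)). apply (G_is B T a b n H); auto.
  intros r. replace (C * gg z * gg r) with (C * gg r * gg z) by ring. apply HC; auto.
  right; ring.
Qed.

Lemma wbound3 B T a b n (H : Hyp B T a b n) e : dec e ->
  exists C, 0 <= C /\ forall t r z, a <= t <= b ->
    Rabs (sem B e t r z * pw n r) <= C * gg r * gg z /\
    Rabs (sem B (dsyn dirT e) t r z * pw n r) <= C * gg r * gg z /\
    Rabs (sem B (dsyn dirT (dsyn dirT e)) t r z * pw n r) <= C * gg r * gg z /\
    Rabs (sem B (dsyn dirZ e) t r z * pw n r) <= C * gg r * gg z /\
    Rabs (sem B (dsyn dirZ (dsyn dirZ e)) t r z * pw n r) <= C * gg r * gg z.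
Proof.
  intros He. pose proof H as [hB hD ha hab hb hn].
  assert (W := wbound B T a b ha hab hb hD n ltac:(lra)).
  destruct (W e He) as [C1 [P1 H1]].
  destruct (W _ (dec_dsyn dirT e He)) as [C2 [P2 H2]].
  destruct (W _ (dec_dsyn dirT _ (dec_dsyn dirT e He))) as [C3 [P3 H3]].
  destruct (W _ (dec_dsyn dirZ e He)) as [C4 [P4 H4]].
  destruct (W _ (dec_dsyn dirZ _ (dec_dsyn dirZ e He))) as [C5 [P5 H5]].
  exists (C1 + C2 + C3 + C4 + C5). split. lra.
  intros t r z Ht.
  pose proof (gg_pos r). pose proof (gg_pos z).
  assert (Hm : forall C', 0 <= C' -> C' <= C1 + C2 + C3 + C4 + C5 ->
     C' * gg r * gg z <= (C1 + C2 + C3 + C4 + C5) * gg r * gg z).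
  { intros. apply Rmult_le_compat_r. lra. apply Rmult_le_compat_r; lra. }
  repeat split.
  - eapply Rle_trans. apply H1; auto. apply Hm; lra.
  - eapply Rle_trans. apply H2; auto. apply Hm; lra.
  - eapply Rle_trans. apply H3; auto. apply Hm; lra.
  - eapply Rle_trans. apply H4; auto. apply Hm; lra.
  - eapply Rle_trans. apply H5; auto. apply Hm; lra.
Qed.

Lemma isd_mulc (f : R -> R) x a c : is_derive f x a -> is_derive (fun s => f s * c) x (a * c).
Proof.
  intros H. pose proof (isd_mult f (fun _ => c) x a 0 H (isd_const c x)) as H2.
  replace (a * c) with (a * c + f x * 0) by ring. exact H2.
Qed.

Lemma G_dt B T a b n (H : Hyp B T a b n) e t z : dec e -> a < t < b ->
  is_derive (fun s => Gi B n e s z) t (Gi B n (dsyn dirT e) t z).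
Proof.
  intros He Ht. pose proof H as [hB hD ha hab hb hn].
  destruct (wbound3 B T a b n H e He) as [C [HC0 HC]].
  assert (Hdl : 0 < Rmin (t - a) (b - t)) by (apply Rmin_pos; lra).
  assert (Hs : forall s, Rabs (s - t) < Rmin (t - a) (b - t) -> a < s < b).
  { intros s Hs. pose proof (Rmin_l (t - a) (b - t)). pose proof (Rmin_r (t - a) (b - t)).
    destruct (Rabs_def2 _ _ Hs). lra. }
  apply (L2 _ _ NF_half (fun s r => sem B e s r z * pw n r)
     (fun s r => sem B (dsyn dirT e) s r z * pw n r)
     (fun s r => sem B (dsyn dirT (dsyn dirT e)) s r z * pw n r) t _ C Hdl).
  - intros s r Hsr. apply isd_mulc. pose proof (Hs s Hsr).
    exact (dsyn_ok B T hB e dirT s r z ltac:(lra)).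
  - intros s r Hsr. apply isd_mulc. pose proof (Hs s Hsr).
    exact (dsyn_ok B T hB (dsyn dirT e) dirT s r z ltac:(lra)).
  - intros s r Hsr. pose proof (Hs s Hsr).
    destruct (HC s r z ltac:(lra)) as [H1 [H2 [H3 _]]].
    pose proof (gg_le1 z). pose proof (gg_pos r). pose proof (gg_pos z).
    assert (C * gg r * gg z <= C * gg r) by (rewrite <- (Rmult_1_r (C * gg r)) at 2; apply Rmult_le_compat_l; nra).
    repeat split; lra.
  - intros s r Hsr. pose proof (Hs s Hsr). split; apply cont_w with T; auto; lra.
Qed.

Lemma G_dz B T a b n (H : Hyp B T a b n) e t z : dec e -> a <= t <= b ->
  is_derive (fun s => Gi B n e t s) z (Gi B n (dsyn dirZ e) t z).
Proof.
  intros He Ht. pose proof H as [hB hD ha hab hb hn].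
  destruct (wbound3 B T a b n H e He) as [C [HC0 HC]].
  apply (L2 _ _ NF_half (fun s r => sem B e t r s * pw n r)
     (fun s r => sem B (dsyn dirZ e) t r s * pw n r)
     (fun s r => sem B (dsyn dirZ (dsyn dirZ e)) t r s * pw n r) z 1 C ltac:(lra)).
  - intros s r Hsr. apply isd_mulc.
    exact (dsyn_ok B T hB e dirZ t r s ltac:(lra)).
  - intros s r Hsr. apply isd_mulc.
    exact (dsyn_ok B T hB (dsyn dirZ e) dirZ t r s ltac:(lra)).
  - intros s r Hsr.
    destruct (HC t r s ltac:(lra)) as [H1 [_ [_ [H2 H3]]]].
    pose proof (gg_le1 s). pose proof (gg_pos r). pose proof (gg_pos s).
    assert (C * gg r * gg s <= C * gg r) by (rewrite <- (Rmult_1_r (C * gg r)) at 2; apply Rmult_le_compat_l; nra).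
    repeat split; lra.
  - intros s r Hsr. split; apply cont_w with T; auto; lra.
Qed.

Lemma G_cont_z B T a b n (H : Hyp B T a b n) e t z : dec e -> a <= t <= b ->
  continuous (fun s => Gi B n e t s) z.
Proof.
  intros He Ht. apply (ex_derive_continuous (K:=R_AbsRing) (V:=R_NormedModule)).
  eexists. apply (G_dz B T a b n H e t z He Ht).
Qed.

Lemma H_is B T a b n (H : Hyp B T a b n) e t : dec e -> a <= t <= b ->
  is_RInt_gen (fun z => Gi B n e t z) (Rbar_locally m_infty) (Rbar_locally p_infty) (Ho B n e t).
Proof.
  intros He Ht. destruct (G_bound B T a b n H e He) as [C [HC0 HC]].
  apply (EX _ _ NF_full _ C).
  - intros z. apply (G_cont_z B T a b n H); auto.
  - intros z. apply HC; auto.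
Qed.

Lemma H_dt B T a b n (H : Hyp B T a b n) e t : dec e -> a < t < b ->
  is_derive (fun s => Ho B n e s) t (Ho B n (dsyn dirT e) t).
Proof.
  intros He Ht.
  assert (He1 := dec_dsyn dirT e He). assert (He2 := dec_dsyn dirT _ He1).
  destruct (G_bound B T a b n H e He) as [C1 [P1 H1]].
  destruct (G_bound B T a b n H _ He1) as [C2 [P2 H2]].
  destruct (G_bound B T a b n H _ He2) as [C3 [P3 H3]].
  assert (Hdl : 0 < Rmin (t - a) (b - t)) by (apply Rmin_pos; lra).
  assert (Hs : forall s, Rabs (s - t) < Rmin (t - a) (b - t) -> a < s < b).
  { intros s Hs. pose proof (Rmin_l (t - a) (b - t)). pose proof (Rmin_r (t - a) (b - t)).
    destruct (Rabs_def2 _ _ Hs). lra. }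
  apply (L2 _ _ NF_full (fun s z => Gi B n e s z) (fun s z => Gi B n (dsyn dirT e) s z)
           (fun s z => Gi B n (dsyn dirT (dsyn dirT e)) s z) t _ (C1 + C2 + C3) Hdl).
  - intros s z Hsz. apply (G_dt B T a b n H); auto.
  - intros s z Hsz. apply (G_dt B T a b n H); auto.
  - intros s z Hsz. pose proof (Hs s Hsz). pose proof (gg_pos z).
    assert (Hab' : a <= s <= b) by lra.
    pose proof (H1 s z Hab'). pose proof (H2 s z Hab'). pose proof (H3 s z Hab').
    repeat split; nra.
  - intros s z Hsz. pose proof (Hs s Hsz). split; apply (G_cont_z B T a b n H); auto; lra.
Qed.

Lemma small_zero x : (forall eta, 0 < eta -> Rabs x <= eta) -> x = 0.
Proof.
  intros H. destruct (Req_dec x 0); auto.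
  assert (0 < Rabs x) by (apply Rabs_pos_lt; auto).
  specialize (H (Rabs x / 2) ltac:(lra)). lra.
Qed.

Lemma FTC0 (A h : R -> R) (M : R) :
  (forall r, 0 < r -> is_derive A r (h r)) ->
  (forall r, continuous h r) ->
  (forall r, Rabs (h r) <= M) ->
  continuous A 0 -> A 0 = 0 ->
  filterlim A (Rbar_locally p_infty) (locally 0) ->
  is_RInt_gen h (at_point 0) (Rbar_locally p_infty) 0.
Proof.
  intros HD Hc HM HA0 E0 Hinf.
  assert (Hex : forall x y, ex_RInt h x y) by (intros; apply ex_RInt_cont; auto).
  assert (S1 : forall b, 0 < b -> RInt h 0 b = A b).
  { intros b Hb. apply Rminus_diag_uniq. apply small_zero. intros eta Heta.
    assert (He2 : 0 < eta / 2) by lra.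
    apply filterlim_locally with (eps := mkposreal _ He2) in HA0.
    destruct HA0 as [dl Hdl].
    set (eps := Rmin (Rmin (dl / 2) (b / 2)) (eta / (2 * (Rabs M + 1)))).
    assert (Hdl0 : 0 < dl) by apply cond_pos.
    assert (HRM : 0 < 2 * (Rabs M + 1)) by (pose proof (Rabs_pos M); lra).
    assert (Heps : 0 < eps).
    { unfold eps. apply Rmin_pos. apply Rmin_pos; lra. apply Rdiv_lt_0_compat; lra. }
    assert (He1 : eps <= dl / 2) by (unfold eps; eapply Rle_trans; [apply Rmin_l| apply Rmin_l]).
    assert (He3 : eps <= b / 2) by (unfold eps; eapply Rle_trans; [apply Rmin_l| apply Rmin_r]).
    assert (He4 : eps <= eta / (2 * (Rabs M + 1))) by (unfold eps; apply Rmin_r).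
    rewrite <- (RInt_Chasles h 0 eps b) by auto.
    assert (E1 : RInt h eps b = A b - A eps).
    { apply is_RInt_unique. apply (is_RInt_derive (V:=R_CompleteNormedModule) A h).
      - intros x Hx. rewrite Rmin_left, Rmax_right in Hx by lra. apply HD. lra.
      - intros; apply Hc. }
    unfold plus; simpl. rewrite E1.
    assert (B1 : Rabs (RInt h 0 eps) <= (eps - 0) * Rabs M).
    { apply abs_RInt_le_const; auto. lra. intros; eapply Rle_trans. apply HM. apply Rle_abs. }
    assert (B2 : Rabs (A eps - A 0) < eta / 2).
    { apply (Hdl eps). apply ball_R. rewrite Rminus_0_r, Rabs_pos_eq by lra. lra. }
    rewrite E0, Rminus_0_r in B2.
    replace (RInt h 0 eps + (A b - A eps) - A b) with (RInt h 0 eps - A eps) by ring.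
    eapply Rle_trans. apply Rabs_triang. rewrite Rabs_Ropp.
    assert (eps * Rabs M <= eta / 2).
    { apply Rle_trans with (eta / (2 * (Rabs M + 1)) * Rabs M).
      apply Rmult_le_compat_r; auto. apply Rabs_pos.
      pose proof (Rabs_pos M).
      apply Rmult_le_reg_r with (2 * (Rabs M + 1)); auto.
      replace (eta / (2 * (Rabs M + 1)) * Rabs M * (2 * (Rabs M + 1))) with (eta * Rabs M) by (field; lra).
      nra. }
    lra. }
  apply (filterlimi_lim_ext_loc (fun ab : R * R => A (snd ab) - A (fst ab))).
  - exists (fun x => x = 0) (fun y => 0 < y). reflexivity. exists 0. auto.
    intros x y -> Hy. simpl. rewrite E0, Rminus_0_r, <- S1 by auto.
    apply (RInt_correct (V:=R_CompleteNormedModule)). auto.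
  - apply filterlim_locally. intros eps.
    apply filterlim_locally with (eps := eps) in Hinf.
    exists (fun x => x = 0) (fun y => ball 0 eps (A y)). reflexivity. auto.
    intros x y -> Hy. simpl. rewrite E0, Rminus_0_r. auto.
Qed.

Lemma lim_gg (f : R -> R) (C : R) : (forall z, Rabs (f z) <= C * gg z) ->
  filterlim f (Rbar_locally p_infty) (locally 0) /\ filterlim f (Rbar_locally m_infty) (locally 0).
Proof.
  intros H.
  assert (HC : 0 <= C).
  { specialize (H 0). pose proof (gg_pos 0). pose proof (Rabs_pos (f 0)).
    destruct (Rle_or_lt 0 C); auto. nra. }
  assert (K : forall eps : posreal, forall z, C / eps < Rabs z -> Rabs (f z) < eps).
  { intros eps z Hz. pose proof (cond_pos eps).
    eapply Rle_lt_trans. apply H. unfold gg.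
    assert (Habs : Rabs z <= 1 + z ^ 2).
    { destruct (Rle_or_lt 0 z). rewrite Rabs_pos_eq; nra. rewrite Rabs_left; nra. }
    assert (0 < Rabs z). { assert (0 <= C / eps) by (apply Rdiv_le_0_compat; lra). lra. }
    apply Rle_lt_trans with (C / Rabs z).
    - unfold Rdiv. apply Rmult_le_compat_l; auto. apply Rinv_le_contravar; auto.
    - apply Rmult_lt_reg_r with (Rabs z); auto. unfold Rdiv.
      rewrite Rmult_assoc, Rinv_l, Rmult_1_r by lra.
      apply Rmult_lt_reg_r with (/ eps). apply Rinv_0_lt_compat; auto.
      replace (eps * Rabs z * / eps) with (Rabs z) by (field; lra). auto. }
  split; apply filterlim_locally; intros eps.
  - exists (C / eps). intros z Hz. apply ball_R. rewrite Rminus_0_r. apply K.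
    assert (0 <= C / eps) by (apply Rdiv_le_0_compat; auto; apply cond_pos).
    rewrite Rabs_pos_eq; lra.
  - exists (- (C / eps)). intros z Hz. apply ball_R. rewrite Rminus_0_r. apply K.
    assert (0 <= C / eps) by (apply Rdiv_le_0_compat; auto; apply cond_pos).
    rewrite Rabs_left; lra.
Qed.

Lemma FTCz B T a b n (H : Hyp B T a b n) e t : dec e -> a <= t <= b ->
  is_RInt_gen (fun z => Gi B n (dsyn dirZ e) t z) (Rbar_locally m_infty) (Rbar_locally p_infty) 0.
Proof.
  intros He Ht.
  destruct (G_bound B T a b n H e He) as [C [HC0 HC]].
  destruct (lim_gg (fun z => Gi B n e t z) C) as [Lp Lm]. intros; apply HC; auto.
  assert (ED : forall z, Derive (fun s => Gi B n e t s) z = Gi B n (dsyn dirZ e) t z).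
  { intros z. apply is_derive_unique. apply (G_dz B T a b n H); auto. }
  apply (is_RInt_gen_ext (Fa := Rbar_locally m_infty) (Fb := Rbar_locally p_infty)
          (Derive (fun s => Gi B n e t s))).
  - apply filter_forall. intros ab x _. apply ED.
  - replace 0 with (0 - 0) by ring.
    apply is_RInt_gen_Derive; auto.
    + apply filter_forall. intros ab x _. eexists. apply (G_dz B T a b n H); auto.
    + apply filter_forall. intros ab x _.
      apply (continuous_ext (fun z => Gi B n (dsyn dirZ e) t z)). intros; symmetry; apply ED.
      apply (G_cont_z B T a b n H); auto. apply dec_dsyn; auto.
Qed.

Lemma sm_ex (F : fn3) T (HF : smooth_slab T F) l d t r z : 0 < t < T -> ex_partial d (Dmulti l F) t r z.
Proof. intros Ht. apply HF; auto. Qed.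

Lemma sm_c (F : fn3) T (HF : smooth_slab T F) l t r z : 0 < t < T -> cont3 (Dmulti l F) t r z.
Proof. intros Ht. apply HF; auto. Qed.

Lemma comm_rz (F : fn3) T (HF : smooth_slab T F) l t r z : 0 < t < T ->
  Dr (Dz (Dmulti l F)) t r z = Dz (Dr (Dmulti l F)) t r z.
Proof.
  intros Ht. set (g := Dmulti l F).
  apply (Schwarz (fun x y => g t x y) r z).
  - exists (mkposreal _ Rlt_0_1). intros u v _ _.
    split; [|split; [|split]].
    + exact (sm_ex F T HF l dirR t u v Ht).
    + exact (sm_ex F T HF l dirZ t u v Ht).
    + exact (sm_ex F T HF (dirZ :: l) dirR t u v Ht).
    + exact (sm_ex F T HF (dirR :: l) dirZ t u v Ht).
  - intros eps. destruct (cont3_ball _ _ _ _ (sm_c F T HF (dirR :: dirZ :: l) t r z Ht) eps (cond_pos eps))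
      as [dl [Hdl Hd]].
    exists (mkposreal _ Hdl). intros u v Hu Hv. apply Hd; auto. rewrite Rminus_diag, Rabs_R0; auto.
  - intros eps. destruct (cont3_ball _ _ _ _ (sm_c F T HF (dirZ :: dirR :: l) t r z Ht) eps (cond_pos eps))
      as [dl [Hdl Hd]].
    exists (mkposreal _ Hdl). intros u v Hu Hv. apply Hd; auto. rewrite Rminus_diag, Rabs_R0; auto.
Qed.

Lemma comm_tr (F : fn3) T (HF : smooth_slab T F) l t r z : 0 < t < T ->
  Dt (Dr (Dmulti l F)) t r z = Dr (Dt (Dmulti l F)) t r z.
Proof.
  intros Ht. set (g := Dmulti l F).
  assert (Hd0 : 0 < Rmin t (T - t)) by (apply Rmin_pos; lra).
  assert (Hin : forall u, Rabs (u - t) < Rmin t (T - t) -> 0 < u < T).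
  { intros u Hu. pose proof (Rmin_l t (T - t)). pose proof (Rmin_r t (T - t)).
    destruct (Rabs_def2 _ _ Hu). lra. }
  apply (Schwarz (fun x y => g x y z) t r).
  - exists (mkposreal _ Hd0). intros u v Hu _. simpl in Hu. pose proof (Hin u Hu) as Hu'.
    split; [|split; [|split]].
    + exact (sm_ex F T HF l dirT u v z Hu').
    + exact (sm_ex F T HF l dirR u v z Hu').
    + exact (sm_ex F T HF (dirR :: l) dirT u v z Hu').
    + exact (sm_ex F T HF (dirT :: l) dirR u v z Hu').
  - intros eps. destruct (cont3_ball _ _ _ _ (sm_c F T HF (dirT :: dirR :: l) t r z Ht) eps (cond_pos eps))
      as [dl [Hdl Hd]].
    exists (mkposreal _ Hdl). intros u v Hu Hv. apply Hd; auto. rewrite Rminus_diag, Rabs_R0; auto.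
  - intros eps. destruct (cont3_ball _ _ _ _ (sm_c F T HF (dirR :: dirT :: l) t r z Ht) eps (cond_pos eps))
      as [dl [Hdl Hd]].
    exists (mkposreal _ Hdl). intros u v Hu Hv. apply Hd; auto. rewrite Rminus_diag, Rabs_R0; auto.
Qed.

Lemma comm_tz (F : fn3) T (HF : smooth_slab T F) l t r z : 0 < t < T ->
  Dt (Dz (Dmulti l F)) t r z = Dz (Dt (Dmulti l F)) t r z.
Proof.
  intros Ht. set (g := Dmulti l F).
  assert (Hd0 : 0 < Rmin t (T - t)) by (apply Rmin_pos; lra).
  assert (Hin : forall u, Rabs (u - t) < Rmin t (T - t) -> 0 < u < T).
  { intros u Hu. pose proof (Rmin_l t (T - t)). pose proof (Rmin_r t (T - t)).
    destruct (Rabs_def2 _ _ Hu). lra. }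
  apply (Schwarz (fun x y => g x r y) t z).
  - exists (mkposreal _ Hd0). intros u v Hu _. simpl in Hu. pose proof (Hin u Hu) as Hu'.
    split; [|split; [|split]].
    + exact (sm_ex F T HF l dirT u r v Hu').
    + exact (sm_ex F T HF l dirZ u r v Hu').
    + exact (sm_ex F T HF (dirZ :: l) dirT u r v Hu').
    + exact (sm_ex F T HF (dirT :: l) dirZ u r v Hu').
  - intros eps. destruct (cont3_ball _ _ _ _ (sm_c F T HF (dirT :: dirZ :: l) t r z Ht) eps (cond_pos eps))
      as [dl [Hdl Hd]].
    exists (mkposreal _ Hdl). intros u v Hu Hv. apply Hd; auto. rewrite Rminus_diag, Rabs_R0; auto.
  - intros eps. destruct (cont3_ball _ _ _ _ (sm_c F T HF (dirZ :: dirT :: l) t r z Ht) eps (cond_pos eps))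
      as [dl [Hdl Hd]].
    exists (mkposreal _ Hdl). intros u v Hu Hv. apply Hd; auto. rewrite Rminus_diag, Rabs_R0; auto.
Qed.

Lemma isd_opp (f : R -> R) x a : is_derive f x a -> is_derive (fun s => - f s) x (- a).
Proof. rewrite !is_derive_Reals. intros; apply (derivable_pt_lim_opp f); auto. Qed.

Lemma isd_scal (f : R -> R) x a c : is_derive f x a -> is_derive (fun s => c * f s) x (c * a).
Proof. rewrite !is_derive_Reals. intros; apply (derivable_pt_lim_scal f); auto. Qed.

Lemma isd_ex (f : R -> R) x : ex_derive f x -> is_derive f x (Derive f x).
Proof. intros; apply Derive_correct; auto. Qed.

Lemma dt_w (n T : R) (w psi : fn3) (Hp : smooth_slab T psi)
  (HL : forall t r z, 0 < t < T -> 0 < r -> - Lap n psi t r z = w t r z) t r z :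
  0 < t < T -> 0 < r ->
  Dt w t r z = - (Dt (Dr (Dr psi)) t r z + n / r * Dt (Dr psi) t r z + Dt (Dz (Dz psi)) t r z).
Proof.
  intros Ht Hr. unfold Dt at 1. apply is_derive_unique.
  apply (is_derive_ext_loc (fun s => - (Dr (Dr psi) s r z + n / r * Dr psi s r z + Dz (Dz psi) s r z))).
  - assert (Hd0 : 0 < Rmin t (T - t)) by (apply Rmin_pos; lra).
    exists (mkposreal _ Hd0). intros s Hs. ballR Hs. simpl in Hs.
    pose proof (Rmin_l t (T - t)). pose proof (Rmin_r t (T - t)).
    destruct (Rabs_def2 _ _ Hs). rewrite <- HL by lra. unfold Lap. reflexivity.
  - apply isd_opp. apply isd_plus. apply isd_plus.
    + apply isd_ex. exact (sm_ex psi T Hp (dirR :: dirR :: nil) dirT t r z Ht).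
    + apply isd_scal. apply isd_ex. exact (sm_ex psi T Hp (dirR :: nil) dirT t r z Ht).
    + apply isd_ex. exact (sm_ex psi T Hp (dirZ :: dirZ :: nil) dirT t r z Ht).
Qed.

Lemma dz_sq (T : R) (u : fn3) (Hu : smooth_slab T u) t r z : 0 < t < T ->
  Dz (fun t' r' z' => u t' r' z' ^ 2) t r z = 2 * u t r z * Dz u t r z.
Proof.
  intros Ht. unfold Dz at 1. apply is_derive_unique.
  apply (is_derive_ext (fun s => u t r s * u t r s)). { intros s; simpl. change (u t r s * u t r s = u t r s * (u t r s * 1)). ring. }
  replace (2 * u t r z * Dz u t r z) with (Dz u t r z * u t r z + u t r z * Dz u t r z) by ring.
  apply isd_mult; apply isd_ex; exact (sm_ex u T Hu nil dirZ t r z Ht).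
Qed.

Definition Bf (u w psi : fn3) (i : nat) : fn3 :=
  match i with 0%nat => u | 1%nat => w | _ => psi end.

Definition U l := Bas 0 l.
Definition Wv l := Bas 1 l.
Definition P l := Bas 2 l.
Definition sc (c : R) (e : dexp) := Mul (Cst c) e.

Definition e_ur := sc (-1) (Mul Rco (P (dirZ :: nil))).
Definition e_uz (n : R) := Add (sc ((n + 1) / 2) (P nil)) (Mul Rco (P (dirR :: nil))).
Definition cc (n : R) := (7 - n) / 4.

Definition eE (n : R) :=
  Add (Mul (U nil) (U nil))
      (sc (cc n) (Add (Mul (P (dirR :: nil)) (P (dirR :: nil))) (Mul (P (dirZ :: nil)) (P (dirZ :: nil))))).

Definition eA (n nu1 nu2 : R) :=
  Add (sc nu1 (Mul (U nil) (U (dirR :: nil))))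
  (Add (sc (-1/2) (Mul e_ur (Mul (U nil) (U nil))))
  (Add (sc (cc n) (Mul (P nil) (P (dirR :: dirT :: nil))))
  (Add (sc (- cc n) (Mul (P nil) (Mul e_ur (Wv nil))))
       (sc (cc n * nu2) (Add (Mul (P nil) (Wv (dirR :: nil))) (sc (-1) (Mul (Wv nil) (P (dirR :: nil))))))))).

Definition eB (n nu1 nu2 : R) :=
  Add (sc nu1 (Mul (U nil) (U (dirZ :: nil))))
  (Add (sc (-1/2) (Mul (e_uz n) (Mul (U nil) (U nil))))
  (Add (sc (cc n) (Mul (P nil) (P (dirZ :: dirT :: nil))))
  (Add (sc (cc n) (Mul (P nil) (Mul (U nil) (U nil))))
  (Add (sc (- cc n) (Mul (P nil) (Mul (e_uz n) (Wv nil))))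
       (sc (cc n * nu2) (Add (Mul (P nil) (Wv (dirZ :: nil))) (sc (-1) (Mul (Wv nil) (P (dirZ :: nil)))))))))).

Definition e1 := Add (Mul (U (dirR :: nil)) (U (dirR :: nil))) (Mul (U (dirZ :: nil)) (U (dirZ :: nil))).
Definition e2 := Mul (Wv nil) (Wv nil).
Definition eX (n nu1 nu2 : R) := Add (sc (- nu1) e1) (sc (- (nu2 * cc n)) e2).

Lemma ident (n nu1 nu2 T : R) (u w psi : fn3)
  (Hu : smooth_slab T u) (Hw : smooth_slab T w) (Hp : smooth_slab T psi)
  (m := (n + 3) / 2)
  (ur := fun t r z => - r * Dz psi t r z)
  (uz := fun t r z => (m - 1) * psi t r z + r * Dr psi t r z)
  (H1 : forall t r z, 0 < t < T -> 0 < r ->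
     Dt u t r z + ur t r z * Dr u t r z + uz t r z * Dz u t r z
     = 2 * u t r z * Dz psi t r z + nu1 * Lap n u t r z)
  (H2 : forall t r z, 0 < t < T -> 0 < r ->
     Dt w t r z + ur t r z * Dr w t r z + uz t r z * Dz w t r z
     = Dz (fun t' r' z' => u t' r' z' ^ 2) t r z + nu2 * Lap n w t r z)
  (H3 : forall t r z, 0 < t < T -> 0 < r -> - Lap n psi t r z = w t r z)
  t r z : 0 < t < T -> 0 < r ->
  let B := Bf u w psi in
  / 2 * sem B (dsyn dirT (eE n)) t r z =
  sem B (eX n nu1 nu2) t r z + n / r * sem B (eA n nu1 nu2) t r z
  + sem B (dsyn dirR (eA n nu1 nu2)) t r z + sem B (dsyn dirZ (eB n nu1 nu2)) t r z.
Proof.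
  intros Ht Hr B. unfold B. simpl.
  pose proof (comm_tr psi T Hp nil t r z Ht) as C1. simpl in C1.
  pose proof (comm_tz psi T Hp nil t r z Ht) as C2. simpl in C2.
  pose proof (comm_rz psi T Hp nil t r z Ht) as C3. simpl in C3.
  assert (C4 : Dt (Dr (Dr psi)) t r z = Dr (Dr (Dt psi)) t r z).
  { pose proof (comm_tr psi T Hp (dirR :: nil) t r z Ht) as C. simpl in C. rewrite C.
    unfold Dr at 1 3. apply Derive_ext. intros s.
    pose proof (comm_tr psi T Hp nil t s z Ht) as C'. simpl in C'. exact C'. }
  assert (C5 : Dt (Dz (Dz psi)) t r z = Dz (Dz (Dt psi)) t r z).
  { pose proof (comm_tz psi T Hp (dirZ :: nil) t r z Ht) as C. simpl in C. rewrite C.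
    unfold Dz at 1 3. apply Derive_ext. intros s.
    pose proof (comm_tz psi T Hp nil t r s Ht) as C'. simpl in C'. exact C'. }
  pose proof (dt_w n T w psi Hp H3 t r z Ht Hr) as DW.
  pose proof (H2 t r z Ht Hr) as E2. rewrite (dz_sq T u Hu t r z Ht) in E2.
  rewrite DW, C1, C4, C5 in E2.
  assert (E3 : Dz (Dz (Dt psi)) t r z =
     - (Dr (Dr (Dt psi)) t r z + n / r * Dr (Dt psi) t r z)
     - (2 * u t r z * Dz u t r z + nu2 * Lap n w t r z - ur t r z * Dr w t r z - uz t r z * Dz w t r z)).
  { lra. }
  pose proof (H1 t r z Ht Hr) as E1.
  assert (E1' : Dt u t r z = 2 * u t r z * Dz psi t r z + nu1 * Lap n u t r z
      - ur t r z * Dr u t r z - uz t r z * Dz u t r z) by lra.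
  pose proof (H3 t r z Ht Hr) as E4. unfold Lap in E4.
  assert (E4' : Dz (Dz psi) t r z = - w t r z - Dr (Dr psi) t r z - n / r * Dr psi t r z) by lra.
  rewrite C1, C2, <- C3, E1', E3, E4'.
  unfold ur, uz, m, Lap, cc. field. lra.
Qed.

Lemma lin2 (Fa Fb : (R -> Prop) -> Prop) (HN : NF Fa Fb) (f g h : R -> R) (al be lf lg : R) :
  is_RInt_gen f Fa Fb lf -> is_RInt_gen g Fa Fb lg ->
  (forall x, h x = al * f x + be * g x) -> is_RInt_gen h Fa Fb (al * lf + be * lg).
Proof.
  intros Hf Hg Hh. pose proof HN as [HFa HFb _ _ _].
  apply (is_RInt_gen_ext (Fa:=Fa) (Fb:=Fb) (fun x => plus (scal al (f x)) (scal be (g x)))).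
  - apply filter_forall. intros ab x _. rewrite Hh. reflexivity.
  - apply (is_RInt_gen_plus (V:=R_NormedModule) (Fa:=Fa) (Fb:=Fb)).
    apply (is_RInt_gen_scal (V:=R_NormedModule) (Fa:=Fa) (Fb:=Fb)); auto.
    apply (is_RInt_gen_scal (V:=R_NormedModule) (Fa:=Fa) (Fb:=Fb)); auto.
Qed.

Lemma uniq (Fa Fb : (R -> Prop) -> Prop) (HN : NF Fa Fb) (f : R -> R) l1 l2 :
  is_RInt_gen f Fa Fb l1 -> is_RInt_gen f Fa Fb l2 -> l1 = l2.
Proof.
  intros H1 H2. pose proof HN as [HFa HFb _ _ _].
  rewrite <- (is_RInt_gen_unique (V:=R_CompleteNormedModule) f l1 H1).
  apply (is_RInt_gen_unique (V:=R_CompleteNormedModule) f l2 H2).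
Qed.

Lemma inner_id B T a b n (H : Hyp B T a b n) (eE0 eA0 eB0 eX0 : dexp)
  (dE : dec eE0) (dA : dec eA0) (dB : dec eB0) (dX : dec eX0)
  (Hid : forall t r z, a <= t <= b -> 0 < r ->
     / 2 * sem B (dsyn dirT eE0) t r z =
     sem B eX0 t r z + n / r * sem B eA0 t r z + sem B (dsyn dirR eA0) t r z + sem B (dsyn dirZ eB0) t r z)
  t z : a <= t <= b ->
  Gi B n (dsyn dirT eE0) t z = 2 * (Gi B n eX0 t z + Gi B n (dsyn dirZ eB0) t z).
Proof.
  intros Ht. pose proof H as [hB hD ha hab hb hn].
  set (eh := Add (Mul (Cst (/ 2)) (dsyn dirT eE0))
               (Add (Mul (Cst (-1)) eX0) (Mul (Cst (-1)) (dsyn dirZ eB0)))).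
  assert (deh : dec eh).
  { unfold eh; simpl. repeat split; right; auto; apply dec_dsyn; auto. }
  destruct (wbound B T a b ha hab hb hD n ltac:(lra) eh deh) as [Ch [Ch0 HCh]].
  destruct (wbound B T a b ha hab hb hD n ltac:(lra) eA0 dA) as [Ca [Ca0 HCa]].
  assert (Hh : is_RInt_gen (fun r => sem B eh t r z * pw n r) (at_point 0) (Rbar_locally p_infty) 0).
  { apply (FTC0 (fun r => sem B eA0 t r z * pw n r) _ Ch).
    - intros r Hr.
      pose proof (dsyn_ok B T hB eA0 dirR t r z ltac:(lra)) as D1. simpl in D1.
      pose proof (isd_mult _ _ r _ _ D1 (pw_derive n r Hr)) as D2.
      replace (sem B eh t r z * pw n r) with
        (sem B (dsyn dirR eA0) t r z * pw n r + sem B eA0 t r z * (n / r * pw n r)).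
      exact D2.
      unfold eh. simpl. rewrite (Hid t r z Ht Hr). ring.
    - intros r. apply cont_w with T; auto; lra.
    - intros r. eapply Rle_trans. apply HCh; auto.
      pose proof (gg_le1 r). pose proof (gg_le1 z). pose proof (gg_pos r). pose proof (gg_pos z).
      assert (gg r * gg z <= 1) by nra. nra.
    - apply cont_w with T; auto; lra.
    - rewrite pw_nonpos by lra. ring.
    - apply (lim_gg (fun r => sem B eA0 t r z * pw n r) (Ca * gg z)). intros r.
      replace (Ca * gg z * gg r) with (Ca * gg r * gg z) by ring. apply HCa; auto. }
  pose proof (G_is B T a b n H eX0 t z dX Ht) as HX.
  pose proof (G_is B T a b n H (dsyn dirZ eB0) t z (dec_dsyn _ _ dB) Ht) as HZ.
  pose proof (G_is B T a b n H (dsyn dirT eE0) t z (dec_dsyn _ _ dE) Ht) as HT.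
  pose proof (lin2 _ _ NF_half (fun r => sem B eX0 t r z * pw n r) (fun r => sem B (dsyn dirZ eB0) t r z * pw n r) (fun r => sem B eX0 t r z * pw n r + sem B (dsyn dirZ eB0) t r z * pw n r)
     1 1 _ _ HX HZ ltac:(intros; cbv beta; ring)) as S1.
  pose proof (lin2 _ _ NF_half _ _ (fun r => / 2 * (sem B (dsyn dirT eE0) t r z * pw n r))
     1 1 _ _ S1 Hh) as S2.
  pose proof (lin2 _ _ NF_half (fun r => sem B (dsyn dirT eE0) t r z * pw n r) (fun r => sem B (dsyn dirT eE0) t r z * pw n r) (fun r => / 2 * (sem B (dsyn dirT eE0) t r z * pw n r))
     (/ 2) 0 _ _ HT HT ltac:(intros; cbv beta; ring)) as S3.
  assert (Eq : forall x, / 2 * (sem B (dsyn dirT eE0) t x z * pw n x) =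
     1 * (sem B eX0 t x z * pw n x + sem B (dsyn dirZ eB0) t x z * pw n x) +
     1 * (sem B eh t x z * pw n x)).
  { intros x. unfold eh. simpl. ring. }
  specialize (S2 Eq).
  pose proof (uniq _ _ NF_half _ _ _ S2 S3). lra.
Qed.

Lemma outer_id B T a b n (H : Hyp B T a b n) (eE0 eA0 eB0 eX0 : dexp)
  (dE : dec eE0) (dA : dec eA0) (dB : dec eB0) (dX : dec eX0)
  (Hid : forall t r z, a <= t <= b -> 0 < r ->
     / 2 * sem B (dsyn dirT eE0) t r z =
     sem B eX0 t r z + n / r * sem B eA0 t r z + sem B (dsyn dirR eA0) t r z + sem B (dsyn dirZ eB0) t r z)
  t : a <= t <= b -> Ho B n (dsyn dirT eE0) t = 2 * Ho B n eX0 t.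
Proof.
  intros Ht.
  pose proof (H_is B T a b n H eX0 t dX Ht) as HX.
  pose proof (FTCz B T a b n H eB0 t dB Ht) as HZ.
  pose proof (H_is B T a b n H (dsyn dirT eE0) t (dec_dsyn _ _ dE) Ht) as HT.
  pose proof (lin2 _ _ NF_full (fun z => Gi B n eX0 t z) (fun z => Gi B n (dsyn dirZ eB0) t z)
     (fun z => Gi B n (dsyn dirT eE0) t z) 2 2 _ _ HX HZ) as S.
  assert (Eq : forall z, Gi B n (dsyn dirT eE0) t z = 2 * Gi B n eX0 t z + 2 * Gi B n (dsyn dirZ eB0) t z).
  { intros z. rewrite (inner_id B T a b n H eE0 eA0 eB0 eX0 dE dA dB dX Hid t z Ht). ring. }
  specialize (S Eq). pose proof (uniq _ _ NF_full _ _ _ S HT). lra.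
Qed.

Lemma lin_G B T a b n (H : Hyp B T a b n) ea eb al be t z : dec ea -> dec eb -> a <= t <= b ->
  Gi B n (Add (Mul (Cst al) ea) (Mul (Cst be) eb)) t z = al * Gi B n ea t z + be * Gi B n eb t z.
Proof.
  intros da db Ht.
  pose proof (G_is B T a b n H ea t z da Ht) as H1.
  pose proof (G_is B T a b n H eb t z db Ht) as H2.
  assert (dab : dec (Add (Mul (Cst al) ea) (Mul (Cst be) eb))) by (simpl; auto).
  pose proof (G_is B T a b n H _ t z dab Ht) as H3.
  pose proof (lin2 _ _ NF_half _ _ (fun r => sem B (Add (Mul (Cst al) ea) (Mul (Cst be) eb)) t r z * pw n r)
     al be _ _ H1 H2) as S.
  assert (Eq : forall r, sem B (Add (Mul (Cst al) ea) (Mul (Cst be) eb)) t r z * pw n r =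
      al * (sem B ea t r z * pw n r) + be * (sem B eb t r z * pw n r)) by (intros; simpl; ring).
  specialize (S Eq). apply (uniq _ _ NF_half _ _ _ H3 S).
Qed.

Lemma lin_H B T a b n (H : Hyp B T a b n) ea eb al be t : dec ea -> dec eb -> a <= t <= b ->
  Ho B n (Add (Mul (Cst al) ea) (Mul (Cst be) eb)) t = al * Ho B n ea t + be * Ho B n eb t.
Proof.
  intros da db Ht.
  pose proof (H_is B T a b n H ea t da Ht) as H1.
  pose proof (H_is B T a b n H eb t db Ht) as H2.
  assert (dab : dec (Add (Mul (Cst al) ea) (Mul (Cst be) eb))) by (simpl; auto).
  pose proof (H_is B T a b n H _ t dab Ht) as H3.
  pose proof (lin2 _ _ NF_full _ _ (fun z => Gi B n (Add (Mul (Cst al) ea) (Mul (Cst be) eb)) t z)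
     al be _ _ H1 H2) as S.
  assert (Eq : forall z, Gi B n (Add (Mul (Cst al) ea) (Mul (Cst be) eb)) t z =
      al * Gi B n ea t z + be * Gi B n eb t z) by (intros; apply (lin_G B T a b n H); auto).
  specialize (S Eq). apply (uniq _ _ NF_full _ _ _ H3 S).
Qed.

Lemma ihp_eq B T a b n (H : Hyp B T a b n) e (F : R -> R -> R) t : dec e -> a <= t <= b ->
  (forall r z, 0 < r -> F r z = sem B e t r z * Rpower r n) -> int_half_plane F = Ho B n e t.
Proof.
  intros de Ht HF. unfold int_half_plane, Ho. symmetry.
  apply (RInt_gen_ext_eq (V:=R_CompleteNormedModule) (Fa:=Rbar_locally m_infty) (Fb:=Rbar_locally p_infty)).
  - intros z. unfold Gi.
    apply (RInt_gen_ext (V:=R_CompleteNormedModule) (Fa:=at_point 0) (Fb:=Rbar_locally p_infty)).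
    + exists (fun x => x = 0) (fun y => 0 < y). reflexivity. exists 0. auto.
      intros x y -> Hy r Hr. simpl in Hr. rewrite Rmin_left, Rmax_right in Hr by lra.
      rewrite HF by lra. rewrite pw_pos_eq by lra. reflexivity.
    + eexists. apply (G_is B T a b n H); auto.
  - eexists. apply (H_is B T a b n H); auto.
Qed.

Lemma Ho_nonneg B T a b n (H : Hyp B T a b n) e t : dec e -> a <= t <= b ->
  (forall r z, 0 < r -> 0 <= sem B e t r z) -> 0 <= Ho B n e t.
Proof.
  intros de Ht Hp.
  apply (NONNEG _ _ NF_full (fun z => Gi B n e t z)). apply (H_is B T a b n H); auto.
  intros z. apply (NONNEG _ _ NF_half (fun r => sem B e t r z * pw n r)). apply (G_is B T a b n H); auto.
  intros r. destruct (Rlt_or_le 0 r).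
  - apply Rmult_le_pos. apply Hp; auto. apply pw_nonneg.
  - rewrite pw_nonpos by auto. lra.
Qed.

Lemma window B T n (HB : forall i, smooth_slab T (B i)) (HD : forall i, rapid_decay T (B i))
  (Hn : 1 <= n <= 7) t : 0 < t < T -> Hyp B T (t / 2) ((t + T) / 2) n.
Proof. intros Ht. split; auto; lra. Qed.

Theorem mainTheorem4 (n nu1 nu2 T : R) (u w psi : fn3) :
  2 <= n -> n < 7 -> 0 <= nu1 -> 0 <= nu2 -> 0 < T ->
  smooth_slab T u -> smooth_slab T w -> smooth_slab T psi ->
  even_r u -> even_r w -> even_r psi ->
  rapid_decay T u -> rapid_decay T w -> rapid_decay T psi ->
  let m := (n + 3) / 2 in
  let ur : fn3 := fun t r z => - r * Dz psi t r z in
  let uz : fn3 := fun t r z => (m - 1) * psi t r z + r * Dr psi t r z in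
  (forall t r z, 0 < t < T -> 0 < r ->
     Dt u t r z + ur t r z * Dr u t r z + uz t r z * Dz u t r z
     = 2 * u t r z * Dz psi t r z + nu1 * Lap n u t r z) ->
  (forall t r z, 0 < t < T -> 0 < r ->
     Dt w t r z + ur t r z * Dr w t r z + uz t r z * Dz w t r z
     = Dz (fun t' r' z' => u t' r' z' ^ 2) t r z + nu2 * Lap n w t r z) ->
  (forall t r z, 0 < t < T -> 0 < r -> - Lap n psi t r z = w t r z) ->
  (forall t, 0 < t < T ->
     is_derive (fun s => / 2 * energy n u psi s) t
       (- nu1 * int_half_plane (fun r z =>
                  (Dr u t r z ^ 2 + Dz u t r z ^ 2) * Rpower r n)
        - nu2 * ((7 - n) / 4) * int_half_plane (fun r z =>
                  Lap n psi t r z ^ 2 * Rpower r n)))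
  /\ (forall t, 0 < t < T -> 0 <= energy n u psi t)
  /\ (forall t1 t2, 0 < t1 -> t1 <= t2 -> t2 < T ->
        energy n u psi t2 <= energy n u psi t1)
  /\ (nu1 = 0 -> nu2 = 0 -> forall t1 t2, 0 < t1 < T -> 0 < t2 < T ->
        energy n u psi t1 = energy n u psi t2).
Proof.
  intros Hn2 Hn7 Hnu1 Hnu2 HT Su Sw Sp _ _ _ Du Dw Dp m ur uz H1 H2 H3.
  set (B := Bf u w psi).
  assert (HB : forall i, smooth_slab T (B i)) by (intros [|[|i]]; simpl; auto).
  assert (HD : forall i, rapid_decay T (B i)) by (intros [|[|i]]; simpl; auto).
  assert (Hn : 1 <= n <= 7) by lra.
  assert (dE : dec (eE n)) by (cbn; tauto).
  assert (dA : dec (eA n nu1 nu2)) by (cbn; tauto).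
  assert (dB : dec (eB n nu1 nu2)) by (cbn; tauto).
  assert (dX : dec (eX n nu1 nu2)) by (cbn; tauto).
  assert (d1 : dec e1) by (cbn; tauto).
  assert (d2 : dec e2) by (cbn; tauto).
  set (I1 := fun t => int_half_plane (fun r z => (Dr u t r z ^ 2 + Dz u t r z ^ 2) * Rpower r n)).
  set (I2 := fun t => int_half_plane (fun r z => Lap n psi t r z ^ 2 * Rpower r n)).
  assert (Main : forall t, 0 < t < T ->
     is_derive (fun s => / 2 * energy n u psi s) t (- nu1 * I1 t - nu2 * ((7 - n) / 4) * I2 t)
     /\ 0 <= energy n u psi t /\ 0 <= I1 t /\ 0 <= I2 t).
  { intros t Ht.
    set (a := t / 2). set (b := (t + T) / 2).
    pose proof (window B T n HB HD Hn t Ht) as HW. fold a b in HW.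
    assert (Hid : forall t r z, a <= t <= b -> 0 < r ->
      / 2 * sem B (dsyn dirT (eE n)) t r z =
      sem B (eX n nu1 nu2) t r z + n / r * sem B (eA n nu1 nu2) t r z
      + sem B (dsyn dirR (eA n nu1 nu2)) t r z + sem B (dsyn dirZ (eB n nu1 nu2)) t r z).
    { intros t' r z Ht' Hr. apply (ident n nu1 nu2 T u w psi Su Sw Sp H1 H2 H3); auto.
      unfold a, b in Ht'. lra. }
    assert (Een : forall s, a <= s <= b -> energy n u psi s = Ho B n (eE n) s).
    { intros s Hs. unfold energy. apply (ihp_eq B T a b n HW); auto.
      intros r z Hr. simpl. unfold cc. ring. }
    assert (EI1 : forall s, a <= s <= b -> I1 s = Ho B n e1 s).
    { intros s Hs. unfold I1. apply (ihp_eq B T a b n HW); auto.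
      intros r z Hr. simpl. ring. }
    assert (EI2 : forall s, a <= s <= b -> I2 s = Ho B n e2 s).
    { intros s Hs. unfold I2. apply (ihp_eq B T a b n HW); auto.
      intros r z Hr. simpl. rewrite <- (H3 s r z) by (unfold a, b in Hs; lra). ring. }
    assert (Ht' : a < t < b) by (unfold a, b; lra).
    assert (Ht'' : a <= t <= b) by lra.
    split; [|split; [|split]].
    - apply (is_derive_ext_loc (fun s => / 2 * Ho B n (eE n) s)).
      + assert (Hd0 : 0 < Rmin (t - a) (b - t)) by (apply Rmin_pos; lra).
        exists (mkposreal _ Hd0). intros s Hs. ballR Hs. simpl in Hs.
        pose proof (Rmin_l (t - a) (b - t)). pose proof (Rmin_r (t - a) (b - t)).
        destruct (Rabs_def2 _ _ Hs). rewrite Een by lra. reflexivity.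
      + replace (- nu1 * I1 t - nu2 * ((7 - n) / 4) * I2 t) with (/ 2 * Ho B n (dsyn dirT (eE n)) t).
        apply isd_scal. apply (H_dt B T a b n HW); auto.
        rewrite (outer_id B T a b n HW (eE n) (eA n nu1 nu2) (eB n nu1 nu2) (eX n nu1 nu2)) by auto.
        unfold eX, sc. rewrite (lin_H B T a b n HW) by auto.
        rewrite EI1, EI2 by auto. unfold cc. field.
    - rewrite Een by auto. apply (Ho_nonneg B T a b n HW); auto.
      intros r z Hr. simpl. pose proof (pow2_ge_0 (u t r z)).
      unfold cc. 
      assert (0 <= (7 - n) / 4) by lra.
      pose proof (pow2_ge_0 (Dr psi t r z)). pose proof (pow2_ge_0 (Dz psi t r z)).
      simpl in *. nra.
    - rewrite EI1 by auto. apply (Ho_nonneg B T a b n HW); auto.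
      intros r z Hr. simpl. nra.
    - rewrite EI2 by auto. apply (Ho_nonneg B T a b n HW); auto.
      intros r z Hr. simpl. nra. }
  assert (Hder : forall t, 0 < t < T ->
     is_derive (energy n u psi) t (2 * (- nu1 * I1 t - nu2 * ((7 - n) / 4) * I2 t))).
  { intros t Ht. destruct (Main t Ht) as [Hd _].
    pose proof (isd_scal _ t _ 2 Hd) as Hd2.
    apply (is_derive_ext (fun s => 2 * (/ 2 * energy n u psi s))). intros s; simpl. field.
    exact Hd2. }
  assert (Hcont : forall t, 0 < t < T -> continuity_pt (energy n u psi) t).
  { intros t Ht. apply continuity_pt_filterlim.
    apply (ex_derive_continuous (K:=R_AbsRing) (V:=R_NormedModule)). eexists. apply Hder; auto. }
  assert (Hmvt : forall t1 t2, 0 < t1 < T -> 0 < t2 < T -> exists c, 0 < c < T /\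
     energy n u psi t2 - energy n u psi t1 = (2 * (- nu1 * I1 c - nu2 * ((7 - n) / 4) * I2 c)) * (t2 - t1)).
  { intros t1 t2 Ht1 Ht2.
    destruct (MVT_gen (energy n u psi) t1 t2 (fun c => 2 * (- nu1 * I1 c - nu2 * ((7 - n) / 4) * I2 c)))
      as [c [Hc E]].
    - intros x Hx. apply Hder.
      pose proof (Rmin_glb_lt t1 t2 0 ltac:(lra) ltac:(lra)).
      pose proof (Rmax_lub_lt t1 t2 T ltac:(lra) ltac:(lra)). lra.
    - intros x Hx. apply Hcont.
      pose proof (Rmin_glb_lt t1 t2 0 ltac:(lra) ltac:(lra)).
      pose proof (Rmax_lub_lt t1 t2 T ltac:(lra) ltac:(lra)). lra.
    - exists c. split; auto.
      pose proof (Rmin_glb_lt t1 t2 0 ltac:(lra) ltac:(lra)).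
      pose proof (Rmax_lub_lt t1 t2 T ltac:(lra) ltac:(lra)). lra. }
  split; [|split; [|split]].
  - intros t Ht. exact (proj1 (Main t Ht)).
  - intros t Ht. apply (Main t Ht).
  - intros t1 t2 Ht1 H12 Ht2.
    destruct (Hmvt t1 t2 ltac:(lra) ltac:(lra)) as [c [Hc E]].
    destruct (Main c Hc) as [_ [_ [P1 P2]]].
    assert (0 <= (7 - n) / 4) by lra.
    assert (0 <= nu1 * I1 c) by nra.
    assert (0 <= nu2 * ((7 - n) / 4) * I2 c).
    { apply Rmult_le_pos; auto. apply Rmult_le_pos; auto. }
    nra.
  - intros Z1 Z2 t1 t2 Ht1 Ht2.
    destruct (Hmvt t2 t1 Ht2 Ht1) as [c [Hc E]].
    rewrite Z1, Z2 in E. lra.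
Qed.
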